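(* Let $\xi$ be any boundary condition, $\sigma\in\Omega^\xi$ and $x\in F_{\mathrm{dec}}(\sigma)\cup F_{\mathrm{diag}}(\sigma)$. Let $\Delta_1=(\sigma_{y_1},\sigma_{z_1},\sigma_{w_1})$ and $\Delta_2=(\sigma_{y_2},\sigma_{z_2},\sigma_{w_2})$ be triangles of $\sigma$ with $|\sigma_{y_1}|>|\sigma_{z_1}|\ge|\sigma_{w_1}|$ and $|\sigma_{y_2}|>|\sigma_{z_2}|\ge|\sigma_{w_2}|$, such that for $i=1,2$ the midpoints $y_i,z_i,w_i$ belong to $\tau(\sigma,x)$ with $z_i,w_i$ children of $y_i$, and such that $y_1$ is an ancestor of $y_2$ in $\tau(\sigma,x)$. Then $|\sigma_{w_1}|\ge|\sigma_{w_2}|$.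
   Context: Let $P$ be a lattice polygon (a simple polygon whose vertices lie in $\mathbb{Z}^2$ and whose sides contain no points of $\mathbb{Z}^2$ other than their endpoints) and let $\Lambda^0$ be the set of points of $\mathbb{Z}^2$ in $P$ (including its boundary). Edges are open straight line segments with endpoints in $\Lambda^0$; $|e|$ denotes the $\ell_1$ length of an edge $e$. A triangulation of $\Lambda^0$ is a maximal collection of pairwise disjoint edges none of which contains a point of $\Lambda^0$; the set $\Lambda$ of midpoints of its edges does not depend on the triangulation, and $\sigma_x$ denotes the edge of $\sigma$ of midpoint $x$. A boundary condition $\xi$ is a set of pairwise disjoint edges containing no point of $\Lambda^0$ and containing all sides of $P$; $\Omega^\xi$ is the set of triangulations containing every edge of $\xi$. In each triangle of a triangulation there is a unique longest edge (in $\ell_1$ length). A unit diagonal is a diagonal of a unit square of $\mathbb{Z}^2$. $F_{\mathrm{dec}}(\sigma)$ is the set of $x\in\Lambda$ such that $\sigma_x$ is not a unit diagonal and is the longest edge of every triangle of $\sigma$ containing it; $F_{\mathrm{diag}}(\sigma)$ is the set of $x$ such that $\sigma_x$ is a unit diagonal and is the longest edge of every triangle of $\sigma$ containing it. Tree of influence: for $x\in F_{\mathrm{dec}}(\sigma)\cup F_{\mathrm{diag}}(\sigma)$ and a triangle $\Delta$ of $\sigma$ containing $\sigma_x$, the rooted structure $\tau^\Delta(\sigma,x)$ on midpoints is built as follows: its root is $x$ and the children of $x$ are the midpoints of the other two edges of $\Delta$; inductively, for a vertex $y$ with parent $z$, let $\Delta'$ be the triangle of $\sigma$ containing $\sigma_y$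 but not $\sigma_z$; if $\Delta'$ exists and $\sigma_y$ is its longest edge, the children of $y$ are the midpoints of the two other edges of $\Delta'$, otherwise $y$ has no children. $\tau(\sigma,x)$ is the union over the (one or two) triangles $\Delta$ containing $\sigma_x$ of $\tau^\Delta(\sigma,x)$, rooted at $x$ (it is a tree); ancestors refer to parent-to-child paths. *)

(* Defs.v *)
From Stdlib Require Import ZArith Reals List Relations.
Open Scope R_scope.

(** Lattice points and (unordered) edges, represented by endpoint pairs. *)
Definition pt := (Z * Z)%type.
Definition edge := (pt * pt)%type.
Definition tri := (pt * pt * pt)%type.
Definition rpt := (R * R)%type.

Definition rx (p : pt) : R := IZR (fst p).
Definition ry (p : pt) : R := IZR (snd p).
Definition emb (p : pt) : rpt := (rx p, ry p).

Definition in_open_seg (e : edge) (q : rpt) : Prop :=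
  exists t, 0 < t < 1 /\
    fst q = rx (fst e) + t * (rx (snd e) - rx (fst e)) /\
    snd q = ry (fst e) + t * (ry (snd e) - ry (fst e)).
Definition in_closed_seg (e : edge) (q : rpt) : Prop :=
  exists t, 0 <= t <= 1 /\
    fst q = rx (fst e) + t * (rx (snd e) - rx (fst e)) /\
    snd q = ry (fst e) + t * (ry (snd e) - ry (fst e)).

Definition same_edge (e e' : edge) : Prop :=
  e = e' \/ e = (snd e', fst e').

Definition side (vs : list pt) (i : nat) : edge :=
  (nth i vs (0%Z, 0%Z), nth ((i + 1) mod length vs) vs (0%Z, 0%Z)).

Definition is_endpoint (v : pt) (e : edge) : Prop := v = fst e \/ v = snd e.

Definition lattice_polygon (vs : list pt) : Prop :=
  (3 <= length vs)%nat /\ NoDup vs /\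
  (forall i j, (i < length vs)%nat -> (j < length vs)%nat -> i <> j ->
     forall q, in_closed_seg (side vs i) q -> in_closed_seg (side vs j) q ->
       exists v, q = emb v /\ is_endpoint v (side vs i) /\ is_endpoint v (side vs j)) /\
  (forall i, (i < length vs)%nat -> forall p : pt, ~ in_open_seg (side vs i) (emb p)).

(** Closed region bounded by the polygon: boundary points, plus points whose
    horizontal rightward ray crosses the boundary an odd number of times
    (standard half-open crossing rule). *)
Definition Rltb (a b : R) : bool := if Rlt_dec a b then true else false.

Definition crosses (q : rpt) (e : edge) : bool :=
  let ay := ry (fst e) in let by_ := ry (snd e) in
  if Bool.eqb (Rltb (snd q) ay) (Rltb (snd q) by_) then false
  else Rltb (fst q) (rx (fst e) + (snd q - ay) * (rx (snd e) - rx (fst e)) / (by_ - ay)).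

Definition crossing_number (vs : list pt) (q : rpt) : nat :=
  length (filter (crosses q) (map (side vs) (seq 0 (length vs)))).

Definition on_boundary (vs : list pt) (q : rpt) : Prop :=
  exists i, (i < length vs)%nat /\ in_closed_seg (side vs i) q.

Definition inP (vs : list pt) (q : rpt) : Prop :=
  on_boundary vs q \/ Nat.odd (crossing_number vs q) = true.

Definition Lambda0 (vs : list pt) (p : pt) : Prop := inP vs (emb p).

Definition is_edge (vs : list pt) (e : edge) : Prop :=
  fst e <> snd e /\ Lambda0 vs (fst e) /\ Lambda0 vs (snd e) /\
  (forall q, in_open_seg e q -> inP vs q).

Definition avoids_Lambda0 (vs : list pt) (e : edge) : Prop :=
  forall p, Lambda0 vs p -> ~ in_open_seg e (emb p).

Definition disjoint_edges (e e' : edge) : Prop :=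
  forall q, ~ (in_open_seg e q /\ in_open_seg e' q).

Definition inS (S : edge -> Prop) (e : edge) : Prop :=
  exists e', S e' /\ same_edge e e'.

Definition admissible_collection (vs : list pt) (S : edge -> Prop) : Prop :=
  (forall e, S e -> is_edge vs e /\ avoids_Lambda0 vs e) /\
  (forall e e', S e -> S e' -> ~ same_edge e e' -> disjoint_edges e e').

Definition triangulation (vs : list pt) (sigma : edge -> Prop) : Prop :=
  admissible_collection vs sigma /\
  (forall e, is_edge vs e -> avoids_Lambda0 vs e ->
     (forall e', sigma e' -> ~ same_edge e e' -> disjoint_edges e e') ->
     inS sigma e).

Definition boundary_condition (vs : list pt) (xi : edge -> Prop) : Prop :=
  admissible_collection vs xi /\
  (forall i, (i < length vs)%nat -> inS xi (side vs i)).

Definition Omega (vs : list pt) (xi sigma : edge -> Prop) : Prop :=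
  triangulation vs sigma /\ (forall e, xi e -> inS sigma e).

(** Midpoints, in doubled coordinates (the midpoint of (a,b) is (a+b)/2;
    we record a+b in Z^2). *)
Definition mid (e : edge) : pt :=
  (fst (fst e) + fst (snd e), snd (fst e) + snd (snd e))%Z.

Definition sig_at (sigma : edge -> Prop) (x : pt) (e : edge) : Prop :=
  inS sigma e /\ mid e = x.

Definition len (e : edge) : Z :=
  (Z.abs (fst (fst e) - fst (snd e)) + Z.abs (snd (fst e) - snd (snd e)))%Z.

Definition unit_diag (e : edge) : Prop :=
  Z.abs (fst (fst e) - fst (snd e)) = 1%Z /\ Z.abs (snd (fst e) - snd (snd e)) = 1%Z.

Definition tA (D : tri) : pt := fst (fst D).
Definition tB (D : tri) : pt := snd (fst D).
Definition tC (D : tri) : pt := snd D.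

Definition tri_has (D : tri) (e : edge) : Prop :=
  same_edge e (tA D, tB D) \/ same_edge e (tB D, tC D) \/ same_edge e (tC D, tA D).

Definition tri_mid (D : tri) (y : pt) : Prop :=
  mid (tA D, tB D) = y \/ mid (tB D, tC D) = y \/ mid (tC D, tA D) = y.

Definition noncollinear (D : tri) : Prop :=
  ((fst (tB D) - fst (tA D)) * (snd (tC D) - snd (tA D))
   - (snd (tB D) - snd (tA D)) * (fst (tC D) - fst (tA D)) <> 0)%Z.

Definition in_tri_interior (D : tri) (q : rpt) : Prop :=
  exists al be ga, 0 < al /\ 0 < be /\ 0 < ga /\ al + be + ga = 1 /\
    fst q = al * rx (tA D) + be * rx (tB D) + ga * rx (tC D) /\
    snd q = al * ry (tA D) + be * ry (tB D) + ga * ry (tC D).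

Definition is_tri (sigma : edge -> Prop) (D : tri) : Prop :=
  noncollinear D /\
  inS sigma (tA D, tB D) /\ inS sigma (tB D, tC D) /\ inS sigma (tC D, tA D) /\
  (forall e q, sigma e -> in_open_seg e q -> ~ in_tri_interior D q).

Definition longest_at (D : tri) (y : pt) : Prop :=
  exists e, tri_has D e /\ mid e = y /\ (forall e', tri_has D e' -> (len e' <= len e)%Z).

Definition longest_edge (D : tri) (e : edge) : Prop :=
  tri_has D e /\ (forall e', tri_has D e' -> (len e' <= len e)%Z).

Definition Fdec (sigma : edge -> Prop) (x : pt) : Prop :=
  exists e, sig_at sigma x e /\ ~ unit_diag e /\
    (forall D, is_tri sigma D -> tri_has D e -> longest_edge D e).

Definition Fdiag (sigma : edge -> Prop) (x : pt) : Prop :=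
  exists e, sig_at sigma x e /\ unit_diag e /\
    (forall D, is_tri sigma D -> tri_has D e -> longest_edge D e).

(** Tree of influence tau(sigma,x): parent-child relation on midpoints. *)
Inductive tchild (sigma : edge -> Prop) (x : pt) : pt -> pt -> Prop :=
| tc_root : forall D c,
    is_tri sigma D -> tri_mid D x -> tri_mid D c -> c <> x ->
    tchild sigma x x c
| tc_step : forall z y D c,
    tchild sigma x z y ->
    is_tri sigma D -> tri_mid D y -> ~ tri_mid D z -> longest_at D y ->
    tri_mid D c -> c <> y ->
    tchild sigma x y c.

Definition in_tree (sigma : edge -> Prop) (x y : pt) : Prop :=
  y = x \/ exists p, tchild sigma x p y.

Definition ancestor (sigma : edge -> Prop) (x a b : pt) : Prop :=
  clos_trans pt (tchild sigma x) a b.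

(* Main.v *)
Require Import Defs.
From Stdlib Require Import ZArith Reals List Relations Lra Lia Bool Classical.

Open Scope R_scope.

Lemma Rltb_t a b : Rltb a b = true <-> a < b.
Proof. unfold Rltb; destruct (Rlt_dec a b); split; intros; auto; try discriminate; lra. Qed.
Lemma Rltb_f a b : Rltb a b = false <-> b <= a.
Proof. unfold Rltb; destruct (Rlt_dec a b); split; intros; auto; try discriminate; lra. Qed.
Lemma Rltb_lt a b : a < b -> Rltb a b = true. Proof. apply Rltb_t. Qed.
Lemma Rltb_ge a b : b <= a -> Rltb a b = false. Proof. apply Rltb_f. Qed.

Lemma Rdiv_le_0_compat a b : 0 <= a -> 0 < b -> 0 <= a / b.
Proof. intros; unfold Rdiv; apply Rmult_le_pos; [lra|left; apply Rinv_0_lt_compat; lra]. Qed.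

Definition crR (qx qy ax ay bx by_ : R) : bool :=
  if Bool.eqb (Rltb qy ay) (Rltb qy by_) then false
  else Rltb qx (ax + (qy - ay) * (bx - ax) / (by_ - ay)).

Definition Wb (ux uy vx vy px py : R) : bool :=
  if Rlt_dec uy vy then Rltb uy py && negb (Rltb vy py) && Rltb (ux + (py-uy)*(vx-ux)/(vy-uy)) px
  else if Rlt_dec vy uy then Rltb vy py && negb (Rltb uy py) && Rltb (vx + (py-vy)*(ux-vx)/(uy-vy)) px
  else false.

Definition NoMeet (ux uy vx vy ax ay bx by_ : R) : Prop :=
  forall t s, 0 <= t <= 1 -> 0 <= s <= 1 ->
    ~ (ux + t * (vx - ux) = ax + s * (bx - ax) /\ uy + t * (vy - uy) = ay + s * (by_ - ay)).

Lemma affine_sign c0 c1 y1 y2 : y1 <= y2 ->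
  (forall y, y1 <= y <= y2 -> c0 + c1 * y <> 0) ->
  (0 < c0 + c1 * y1 <-> 0 < c0 + c1 * y2).
Proof.
  intros Hle H.
  assert (H1 := H y1 ltac:(lra)). assert (H2 := H y2 ltac:(lra)).
  split; intro Hp; destruct (Rlt_dec 0 (c0 + c1 * y2)) as [|Hn]; auto;
    destruct (Rlt_dec 0 (c0 + c1 * y1)) as [|Hn']; auto; try lra.
  - exfalso. assert (Hc : c1 < 0) by nra.
    apply (H (- c0 / c1)); [split|].
    + apply Rmult_le_reg_r with (- c1); [lra|]. replace (- c0 / c1 * - c1) with c0 by (field; lra). lra.
    + apply Rmult_le_reg_r with (- c1); [lra|]. replace (- c0 / c1 * - c1) with c0 by (field; lra). lra.
    + field; lra.
  - exfalso. assert (Hc : c1 > 0) by nra.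
    apply (H (- c0 / c1)); [split|].
    + apply Rmult_le_reg_r with c1; [lra|]. replace (- c0 / c1 * c1) with (-c0) by (field; lra). lra.
    + apply Rmult_le_reg_r with c1; [lra|]. replace (- c0 / c1 * c1) with (-c0) by (field; lra). lra.
    + field; lra.
Qed.

Ltac rlt := repeat match goal with
  | |- context [Rltb ?a ?b] =>
      let H := fresh in destruct (Rlt_dec a b) as [H|H];
      [rewrite (Rltb_lt a b H) | rewrite (Rltb_ge a b (Rnot_lt_le _ _ H))]
  end.

Lemma core_up ux uy vx vy ax ay bx by_ :
  uy < vy -> ay < by_ -> NoMeet ux uy vx vy ax ay bx by_ ->
  xorb (crR ux uy ax ay bx by_) (crR vx vy ax ay bx by_) =
  xorb (Wb ux uy vx vy ax ay) (Wb ux uy vx vy bx by_).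
Proof.
  intros Huv Hab HN.
  set (cs := (bx-ax)/(by_-ay)). set (cu := (vx-ux)/(vy-uy)).
  set (c1 := cs - cu). set (c0 := ax - ay*cs - ux + uy*cu).
  assert (HXs : forall y, ax + (y - ay) * (bx - ax) / (by_ - ay) = ax + (y-ay)*cs)
    by (intros; unfold cs; field; lra).
  assert (HLu : forall y, ux + (y - uy) * (vx - ux) / (vy - uy) = ux + (y-uy)*cu)
    by (intros; unfold cu; field; lra).
  assert (Hf : forall y, ax + (y-ay)*cs - (ux + (y-uy)*cu) = c0 + c1*y)
    by (intros; unfold c0, c1; ring).
  assert (HK : forall y, ay <= y -> uy <= y -> y <= by_ -> y <= vy -> c0 + c1*y <> 0).
  { intros y H1 H2 H3 H4 He. apply (HN ((y-uy)/(vy-uy)) ((y-ay)/(by_-ay))).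
    - split. apply Rdiv_le_0_compat; lra.
      apply Rmult_le_reg_r with (vy-uy); [lra|]. field_simplify; lra.
    - split. apply Rdiv_le_0_compat; lra.
      apply Rmult_le_reg_r with (by_-ay); [lra|]. field_simplify; lra.
    - split.
      + rewrite <- Hf in He.
        replace (ux + (y - uy) / (vy - uy) * (vx - ux)) with (ux + (y-uy)*cu) by (unfold cu; field; lra).
        replace (ax + (y - ay) / (by_ - ay) * (bx - ax)) with (ax + (y-ay)*cs) by (unfold cs; field; lra).
        lra.
      + field; lra. }
  set (k0 := Rmax ay uy).
  set (sg := Rltb 0 (c0 + c1 * k0)).
  assert (HS : forall y, ay <= y -> uy <= y -> y <= by_ -> y <= vy -> Rltb 0 (c0 + c1*y) = sg).
  { intros y H1 H2 H3 H4. unfold sg.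
    assert (Hk0 : ay <= k0 /\ uy <= k0 /\ k0 <= y).
    { unfold k0; unfold Rmax; destruct (Rle_dec ay uy); lra. }
    assert (E := affine_sign c0 c1 k0 y ltac:(lra)
       (fun z Hz => HK z ltac:(lra) ltac:(lra) ltac:(lra) ltac:(lra))).
    destruct (Rltb 0 (c0 + c1 * y)) eqn:E1; destruct (Rltb 0 (c0 + c1 * k0)) eqn:E2; auto.
    - apply Rltb_t in E1. apply Rltb_f in E2. lra.
    - apply Rltb_f in E1. apply Rltb_t in E2. apply E in E2. lra. }
  assert (Eu : crR ux uy ax ay bx by_ = (negb (Rltb uy ay) && Rltb uy by_) && Rltb 0 (c0 + c1*uy)).
  { unfold crR. rewrite HXs. rewrite <- (Hf uy).
    replace (ux + (uy - uy)*cu) with ux by ring.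
    destruct (Rltb uy ay) eqn:E1; destruct (Rltb uy by_) eqn:E2; simpl; auto.
    - apply Rltb_t in E1; apply Rltb_f in E2; lra.
    - unfold Rltb; destruct (Rlt_dec ux _); destruct (Rlt_dec 0 _); auto; lra. }
  assert (Ev : crR vx vy ax ay bx by_ = (negb (Rltb vy ay) && Rltb vy by_) && Rltb 0 (c0 + c1*vy)).
  { unfold crR. rewrite HXs. rewrite <- (Hf vy).
    replace (ux + (vy - uy)*cu) with vx by (unfold cu; field; lra).
    destruct (Rltb vy ay) eqn:E1; destruct (Rltb vy by_) eqn:E2; simpl; auto.
    - apply Rltb_t in E1; apply Rltb_f in E2; lra.
    - unfold Rltb; destruct (Rlt_dec vx _); destruct (Rlt_dec 0 _); auto; lra. }
  assert (Ea : Wb ux uy vx vy ax ay = (Rltb uy ay && negb (Rltb vy ay)) && Rltb 0 (c0 + c1*ay)).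
  { unfold Wb. destruct (Rlt_dec uy vy); [|lra]. rewrite HLu. rewrite <- (Hf ay).
    replace (ax + (ay - ay)*cs) with ax by ring.
    f_equal. unfold Rltb; destruct (Rlt_dec (ux + _) ax); destruct (Rlt_dec 0 _); auto; lra. }
  assert (Eb : Wb ux uy vx vy bx by_ = (Rltb uy by_ && negb (Rltb vy by_)) && Rltb 0 (c0 + c1*by_)).
  { unfold Wb. destruct (Rlt_dec uy vy); [|lra]. rewrite HLu. rewrite <- (Hf by_).
    replace (ax + (by_ - ay)*cs) with bx by (unfold cs; field; lra).
    f_equal. unfold Rltb; destruct (Rlt_dec (ux + _) bx); destruct (Rlt_dec 0 _); auto; lra. }
  rewrite Eu, Ev, Ea, Eb.
  assert (G : forall (A : bool) y, (A = true -> ay <= y /\ uy <= y /\ y <= by_ /\ y <= vy) ->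
             A && Rltb 0 (c0 + c1*y) = A && sg).
  { intros A y HA. destruct A; auto. simpl. destruct (HA eq_refl) as (?&?&?&?). apply HS; auto. }
  rewrite (G _ uy), (G _ vy), (G _ ay), (G _ by_).
  - destruct sg; simpl; [|rewrite !andb_false_r; reflexivity]. rewrite !andb_true_r. rlt; simpl; auto; lra.
  - intro E. apply andb_true_iff in E as [E1 E2]. apply negb_true_iff in E2.
    apply Rltb_t in E1; apply Rltb_f in E2; lra.
  - intro E. apply andb_true_iff in E as [E1 E2]. apply negb_true_iff in E2.
    apply Rltb_t in E1; apply Rltb_f in E2; lra.
  - intro E. apply andb_true_iff in E as [E1 E2]. apply negb_true_iff in E1.
    apply Rltb_f in E1; apply Rltb_t in E2; lra.
  - intro E. apply andb_true_iff in E as [E1 E2]. apply negb_true_iff in E1.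
    apply Rltb_f in E1; apply Rltb_t in E2; lra.
Qed.

Lemma beqb_sym a b : Bool.eqb a b = Bool.eqb b a.
Proof. destruct a, b; reflexivity. Qed.

Lemma crR_swap qx qy ax ay bx by_ : ay <> by_ ->
  crR qx qy ax ay bx by_ = crR qx qy bx by_ ax ay.
Proof.
  intro H. unfold crR. rewrite beqb_sym.
  destruct (Bool.eqb _ _); auto.
  replace (ax + (qy - ay) * (bx - ax) / (by_ - ay)) with (bx + (qy - by_) * (ax - bx) / (ay - by_)); auto.
  field; split; lra.
Qed.

Lemma Wb_sym ux uy vx vy px py : Wb ux uy vx vy px py = Wb vx vy ux uy px py.
Proof.
  unfold Wb. destruct (Rlt_dec uy vy); destruct (Rlt_dec vy uy); auto; lra.
Qed.

Lemma NoMeet_ab ux uy vx vy ax ay bx by_ : NoMeet ux uy vx vy ax ay bx by_ -> NoMeet ux uy vx vy bx by_ ax ay.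
Proof.
  intros H t s Ht Hs [E1 E2]. apply (H t (1-s) Ht ltac:(lra)). split; lra.
Qed.

Lemma NoMeet_uv ux uy vx vy ax ay bx by_ : NoMeet ux uy vx vy ax ay bx by_ -> NoMeet vx vy ux uy ax ay bx by_.
Proof.
  intros H t s Ht Hs [E1 E2]. apply (H (1-t) s ltac:(lra) Hs). split; lra.
Qed.

Lemma horiz_side_up ux uy vx vy ax ay bx :
  uy < vy -> NoMeet ux uy vx vy ax ay bx ay ->
  Wb ux uy vx vy ax ay = Wb ux uy vx vy bx ay.
Proof.
  intros Huv HN. unfold Wb. destruct (Rlt_dec uy vy); [|lra].
  destruct (Rltb uy ay && negb (Rltb vy ay)) eqn:E; simpl; auto.
  apply andb_true_iff in E as [E1 E2]. apply negb_true_iff in E2.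
  apply Rltb_t in E1; apply Rltb_f in E2.
  set (Lx := ux + (ay - uy) * (vx - ux) / (vy - uy)).
  assert (Ht : 0 <= (ay-uy)/(vy-uy) <= 1).
  { split. apply Rdiv_le_0_compat; lra.
    apply Rmult_le_reg_r with (vy-uy); [lra|]. field_simplify; lra. }
  assert (Hpt : forall s, 0 <= s <= 1 -> Lx = ax + s*(bx - ax) -> False).
  { intros s Hs Hx. apply (HN ((ay-uy)/(vy-uy)) s Ht Hs). split.
    - rewrite <- Hx. unfold Lx. field. lra.
    - field. lra. }
  unfold Rltb; destruct (Rlt_dec Lx ax); destruct (Rlt_dec Lx bx); auto; exfalso.
  - apply (Hpt ((Lx - ax)/(bx-ax))).
    + split. apply Rmult_le_reg_r with (ax - bx); [lra|].
      replace ((Lx - ax) / (bx - ax) * (ax - bx)) with (ax - Lx) by (field; lra). lra.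
      apply Rmult_le_reg_r with (ax-bx); [lra|].
      replace ((Lx - ax) / (bx - ax) * (ax - bx)) with (ax - Lx) by (field; lra). lra.
    + field; lra.
  - apply (Hpt ((Lx - ax)/(bx-ax))).
    + split. apply Rdiv_le_0_compat; lra.
      apply Rmult_le_reg_r with (bx-ax); [lra|]. field_simplify; lra.
    + field; lra.
Qed.

Lemma horiz_uv ux vx uy ax ay bx by_ :
  NoMeet ux uy vx uy ax ay bx by_ ->
  crR ux uy ax ay bx by_ = crR vx uy ax ay bx by_.
Proof.
  intros HN. unfold crR.
  destruct (Bool.eqb (Rltb uy ay) (Rltb uy by_)) eqn:E; auto.
  assert (Hs : 0 <= (uy - ay)/(by_ - ay) <= 1 /\ ay <> by_).
  { destruct (Rltb uy ay) eqn:E1; destruct (Rltb uy by_) eqn:E2; try discriminate;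
    [apply Rltb_t in E1; apply Rltb_f in E2|apply Rltb_f in E1; apply Rltb_t in E2];
    (split; [split|lra]).
    - apply Rmult_le_reg_r with (ay - by_); [lra|].
      replace ((uy - ay) / (by_ - ay) * (ay - by_)) with (ay - uy) by (field; lra). lra.
    - apply Rmult_le_reg_r with (ay - by_); [lra|].
      replace ((uy - ay) / (by_ - ay) * (ay - by_)) with (ay - uy) by (field; lra). lra.
    - apply Rdiv_le_0_compat; lra.
    - apply Rmult_le_reg_r with (by_ - ay); [lra|]. field_simplify; lra. }
  destruct Hs as [Hs Hab].
  set (X := ax + (uy - ay) * (bx - ax) / (by_ - ay)).
  assert (Hpt : forall t, 0 <= t <= 1 -> ux + t*(vx-ux) = X -> False).
  { intros t Ht Hx. apply (HN t _ Ht Hs). split.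
    - rewrite Hx. unfold X. field. lra.
    - field. lra. }
  unfold Rltb; destruct (Rlt_dec ux X); destruct (Rlt_dec vx X); auto; exfalso.
  - apply (Hpt ((X - ux)/(vx-ux))).
    + split. apply Rdiv_le_0_compat; lra.
      apply Rmult_le_reg_r with (vx-ux); [lra|]. field_simplify; lra.
    + field; lra.
  - apply (Hpt ((X - ux)/(vx-ux))).
    + split. apply Rmult_le_reg_r with (ux - vx); [lra|].
      replace ((X - ux) / (vx - ux) * (ux - vx)) with (ux - X) by (field; lra). lra.
      apply Rmult_le_reg_r with (ux-vx); [lra|].
      replace ((X - ux) / (vx - ux) * (ux - vx)) with (ux - X) by (field; lra). lra.
    + field; lra.
Qed.

Lemma per_side ux uy vx vy ax ay bx by_ :
  NoMeet ux uy vx vy ax ay bx by_ ->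
  xorb (crR ux uy ax ay bx by_) (crR vx vy ax ay bx by_) =
  xorb (Wb ux uy vx vy ax ay) (Wb ux uy vx vy bx by_).
Proof.
  intros HN.
  destruct (Rtotal_order uy vy) as [Huv|[Huv|Huv]].
  - destruct (Rtotal_order ay by_) as [Hab|[Hab|Hab]].
    + apply core_up; auto.
    + subst by_. unfold crR. rewrite !Bool.eqb_reflx. simpl.
      rewrite (horiz_side_up ux uy vx vy ax ay bx); auto. destruct (Wb _ _ _ _ _ _); auto.
    + rewrite (crR_swap ux), (crR_swap vx) by lra. rewrite xorb_comm with (b := Wb _ _ _ _ ax ay).
      apply core_up; auto. apply NoMeet_ab; auto.
  - subst vy. rewrite (horiz_uv ux vx uy ax ay bx by_ HN). unfold Wb.
    destruct (Rlt_dec uy uy); [lra|]. rewrite !xorb_nilpotent. reflexivity.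
  - rewrite xorb_comm. rewrite (Wb_sym ux), (Wb_sym ux). apply NoMeet_uv in HN.
    destruct (Rtotal_order ay by_) as [Hab|[Hab|Hab]].
    + apply core_up; auto.
    + subst by_. unfold crR. rewrite !Bool.eqb_reflx. simpl.
      rewrite (horiz_side_up vx vy ux uy ax ay bx); auto. destruct (Wb _ _ _ _ _ _); auto.
    + rewrite (crR_swap ux), (crR_swap vx) by lra. rewrite xorb_comm with (b := Wb _ _ _ _ ax ay).
      apply core_up; auto. apply NoMeet_ab; auto.
Qed.

Fixpoint par (f : nat -> bool) (l : list nat) : bool :=
  match l with nil => false | i :: l' => xorb (f i) (par f l') end.

Lemma par_odd f l : Nat.odd (length (filter f l)) = par f l.
Proof.
  induction l as [|i l IH]; simpl; auto.
  destruct (f i); simpl; rewrite <- IH; auto.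
  rewrite Nat.odd_succ, <- Nat.negb_odd. destruct (Nat.odd _); reflexivity.
Qed.

Lemma par_ext f g l : (forall i, In i l -> f i = g i) -> par f l = par g l.
Proof.
  induction l; simpl; intros H; auto. rewrite H by auto. rewrite IHl; auto.
Qed.

Lemma par_xor f g l : xorb (par f l) (par g l) = par (fun i => xorb (f i) (g i)) l.
Proof.
  induction l; simpl; auto. rewrite <- IHl.
  destruct (f a), (g a), (par f l), (par g l); reflexivity.
Qed.

Lemma par_app f l1 l2 : par f (l1 ++ l2) = xorb (par f l1) (par f l2).
Proof. induction l1; simpl; auto. rewrite IHl1. rewrite xorb_assoc. auto. Qed.

Lemma par_shift f m n : par (fun i => f (S i)) (seq m n) = par f (seq (S m) n).
Proof. revert m; induction n; intros; simpl; auto. rewrite IHn. auto. Qed.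

Lemma par_cyc w n : (1 <= n)%nat -> par (fun i => w ((i+1) mod n)%nat) (seq 0 n) = par w (seq 0 n).
Proof.
  intros Hn. destruct n as [|m]; [lia|].
  assert (E : seq 0 (S m) = seq 0 m ++ m :: nil) by (rewrite seq_S; auto).
  rewrite E at 1. rewrite par_app. cbn [par].
  rewrite (par_ext _ (fun i => w (S i)) (seq 0 m)).
  2:{ intros i Hi. apply in_seq in Hi. f_equal. rewrite Nat.mod_small; lia. }
  rewrite par_shift. replace ((m+1) mod S m)%nat with 0%nat.
  2:{ replace (m+1)%nat with (S m) by lia. symmetry; apply Nat.Div0.mod_same. }
  cbn [seq par]. rewrite xorb_false_r. destruct (w 0%nat), (par w (seq 1 m)); reflexivity.
Qed.

Lemma filter_map_len {A B} (p : B -> bool) (h : A -> B) l :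
  length (filter p (map h l)) = length (filter (fun a => p (h a)) l).
Proof. induction l; simpl; auto. destruct (p (h a)); simpl; auto. Qed.

Definition ptx (q : rpt) := fst q.

Lemma parity_invariance (vs : list pt) (u v : rpt) :
  (1 <= length vs)%nat ->
  (forall i, (i < length vs)%nat ->
     NoMeet (fst u) (snd u) (fst v) (snd v)
       (rx (fst (side vs i))) (ry (fst (side vs i))) (rx (snd (side vs i))) (ry (snd (side vs i)))) ->
  Nat.odd (crossing_number vs u) = Nat.odd (crossing_number vs v).
Proof.
  intros Hn H. unfold crossing_number. rewrite !filter_map_len, !par_odd.
  set (n := length vs).
  set (w := fun i => Wb (fst u) (snd u) (fst v) (snd v) (rx (nth i vs (0%Z,0%Z))) (ry (nth i vs (0%Z,0%Z)))).
  assert (E : xorb (par (fun a => crosses u (side vs a)) (seq 0 n)) (par (fun a => crosses v (side vs a)) (seq 0 n)) = false).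
  { rewrite par_xor.
    rewrite (par_ext _ (fun i => xorb (w i) (w ((i+1) mod n)%nat))).
    - rewrite <- par_xor. rewrite par_cyc by auto. apply xorb_nilpotent.
    - intros i Hi. apply in_seq in Hi. unfold crosses. 
      pose proof (per_side _ _ _ _ _ _ _ _ (H i ltac:(lia))) as P.
      unfold crR in P. unfold w, side in *. simpl in *. exact P. }
  destruct (par _ (seq 0 n)), (par _ (seq 0 n)); simpl in *; auto; discriminate.
Qed.

Open Scope R_scope.

Definition Setup vs xi sigma := lattice_polygon vs /\ boundary_condition vs xi /\ Omega vs xi sigma.

Lemma same_edge_refl e : same_edge e e. Proof. left; auto. Qed.
Lemma same_edge_sym e e' : same_edge e e' -> same_edge e' e.
Proof. destruct e, e'; unfold same_edge; simpl; intros [H|H]; inversion H; subst; auto. Qed.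
Lemma same_edge_trans e1 e2 e3 : same_edge e1 e2 -> same_edge e2 e3 -> same_edge e1 e3.
Proof.
  destruct e1, e2, e3; unfold same_edge; simpl; intros [H|H] [H'|H']; inversion H; inversion H'; subst; auto.
Qed.
Lemma same_edge_swap a b : same_edge (a,b) (b,a). Proof. right; auto. Qed.

Lemma open_swap a b q : in_open_seg (a,b) q -> in_open_seg (b,a) q.
Proof.
  intros (t & Ht & E1 & E2). exists (1-t). simpl in *. split; [lra|]. split; lra.
Qed.
Lemma closed_swap a b q : in_closed_seg (a,b) q -> in_closed_seg (b,a) q.
Proof.
  intros (t & Ht & E1 & E2). exists (1-t). simpl in *. split; [lra|]. split; lra.
Qed.
Lemma open_same e e' q : same_edge e e' -> in_open_seg e q -> in_open_seg e' q.
Proof. destruct e, e'; intros [H|H] Ho; inversion H; subst; auto. apply open_swap; auto. Qed.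
Lemma closed_same e e' q : same_edge e e' -> in_closed_seg e q -> in_closed_seg e' q.
Proof. destruct e, e'; intros [H|H] Ho; inversion H; subst; auto. apply closed_swap; auto. Qed.
Lemma inS_same S e e' : same_edge e e' -> inS S e -> inS S e'.
Proof. intros H (f & Hf & Hs). exists f; split; auto. eapply same_edge_trans; eauto. apply same_edge_sym; auto. Qed.
Lemma len_same e e' : same_edge e e' -> len e = len e'.
Proof. destruct e as [[a1 a2][b1 b2]], e' as [[c1 c2][d1 d2]]; intros [H|H]; inversion H; subst; unfold len; simpl; lia. Qed.
Lemma mid_same e e' : same_edge e e' -> mid e = mid e'.
Proof. destruct e as [[a1 a2][b1 b2]], e' as [[c1 c2][d1 d2]]; intros [H|H]; inversion H; subst; unfold mid; simpl; f_equal; lia. Qed.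

Definition rmid (e : edge) : rpt := ((rx (fst e) + rx (snd e)) / 2, (ry (fst e) + ry (snd e)) / 2).
Lemma rmid_open e : in_open_seg e (rmid e).
Proof. exists (1/2). unfold rmid; simpl. split; [lra|]. split; field. Qed.
Lemma rmid_mid e e' : mid e = mid e' -> rmid e = rmid e'.
Proof.
  destruct e as [[a1 a2][b1 b2]], e' as [[c1 c2][d1 d2]]; unfold mid, rmid, rx, ry; simpl.
  intros H; inversion H. rewrite <- !plus_IZR. rewrite H1, H2. auto.
Qed.

Lemma sigma_adm vs xi sigma : Setup vs xi sigma -> admissible_collection vs sigma.
Proof. intros (_&_&(H&_)&_). exact H. Qed.

Lemma inS_sigma_edge vs xi sigma e : Setup vs xi sigma -> inS sigma e ->
  exists e', sigma e' /\ same_edge e e' /\ is_edge vs e' /\ avoids_Lambda0 vs e'.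
Proof.
  intros HS (e' & He' & Hs). destruct (sigma_adm _ _ _ HS) as [H1 _].
  destruct (H1 e' He'). exists e'; auto.
Qed.

Lemma mid_inj vs xi sigma e1 e2 : Setup vs xi sigma -> inS sigma e1 -> inS sigma e2 ->
  mid e1 = mid e2 -> same_edge e1 e2.
Proof.
  intros HS H1 H2 Hm.
  destruct H1 as (f1 & Hf1 & S1). destruct H2 as (f2 & Hf2 & S2).
  destruct (sigma_adm _ _ _ HS) as [_ Hd].
  destruct (classic (same_edge f1 f2)) as [Hs|Hs].
  - eapply same_edge_trans; [eauto|]. eapply same_edge_trans; [eauto|]. apply same_edge_sym; auto.
  - exfalso. apply (Hd f1 f2 Hf1 Hf2 Hs (rmid e1)). split.
    + eapply open_same; eauto. apply rmid_open.
    + rewrite (rmid_mid _ _ Hm). eapply open_same; eauto. apply rmid_open.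
Qed.

Definition Int3 (A B C : pt) (q : rpt) := exists al be ga, 0<al /\ 0<be /\ 0<ga /\ al+be+ga = 1 /\
  fst q = al*rx A + be*rx B + ga*rx C /\ snd q = al*ry A + be*ry B + ga*ry C.

Lemma Int3_rot A B C q : Int3 A B C q -> Int3 B C A q.
Proof. intros (a&b&c&?&?&?&?&?&?). exists b, c, a. repeat split; lra. Qed.
Lemma Int3_swap A B C q : Int3 A B C q -> Int3 B A C q.
Proof. intros (a&b&c&?&?&?&?&?&?). exists b, a, c. repeat split; lra. Qed.

Definition seg (u v : rpt) (t : R) : rpt := (fst u + t*(fst v - fst u), snd u + t*(snd v - snd u)).

Lemma Int3_convex A B C u v t : Int3 A B C u -> Int3 A B C v -> 0 <= t <= 1 -> Int3 A B C (seg u v t).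
Proof.
  intros (a&b&c&?&?&?&?&Hx&Hy) (a'&b'&c'&?&?&?&?&Hx'&Hy') Ht.
  exists (a + t*(a'-a)), (b + t*(b'-b)), (c + t*(c'-c)). unfold seg; simpl.
  rewrite Hx, Hy, Hx', Hy'. repeat split; try ring; try nra.
Qed.

Lemma Int3_edge A B C s t : 0 < s < 1 -> 0 < t < 1 ->
  Int3 A B C ((1-t)*((1-s)*rx A + s*rx B) + t*rx C, (1-t)*((1-s)*ry A + s*ry B) + t*ry C).
Proof.
  intros Hs Ht. exists ((1-t)*(1-s)), ((1-t)*s), t. simpl. repeat split; try ring; nra.
Qed.

Definition detR (A B C : pt) := (rx B - rx A)*(ry C - ry A) - (ry B - ry A)*(rx C - rx A).

Lemma Int3_open A B C q0 q1 : detR A B C <> 0 -> Int3 A B C q0 ->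
  exists t, 0 < t < 1 /\ Int3 A B C (seg q0 q1 t).
Proof.
  intros HD (a&b&c&Ha&Hb&Hc&Hs&Hx&Hy).
  destruct q1 as [x y].
  set (a1 := ((rx B - x)*(ry C - y) - (ry B - y)*(rx C - x)) / detR A B C).
  set (b1 := ((rx C - x)*(ry A - y) - (ry C - y)*(rx A - x)) / detR A B C).
  set (c1 := 1 - a1 - b1).
  assert (Ex : x = a1*rx A + b1*rx B + c1*rx C) by (unfold c1, a1, b1, detR in *; field; auto).
  assert (Ey : y = a1*ry A + b1*ry B + c1*ry C) by (unfold c1, a1, b1, detR in *; field; auto).
  set (m := Rmin a (Rmin b c)).
  assert (Hm : 0 < m /\ m <= a /\ m <= b /\ m <= c).
  { unfold m, Rmin. destruct (Rle_dec b c); destruct (Rle_dec a _); lra. }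
  set (M := Rabs (a1 - a) + Rabs (b1 - b) + Rabs (c1 - c)).
  assert (HM : 0 <= M) by (unfold M; pose proof (Rabs_pos (a1-a)); pose proof (Rabs_pos (b1-b)); pose proof (Rabs_pos (c1-c)); lra).
  set (t := m / (2*(m+M))).
  assert (Ht : 0 < t) by (unfold t; apply Rdiv_lt_0_compat; lra).
  assert (Ht2 : t * (2*(m+M)) = m) by (unfold t; field; lra).
  assert (Hbound : forall d, Rabs d <= M -> 0 < m/2 + t*d).
  { intros d Hd. assert (t * Rabs d <= t * M) by (apply Rmult_le_compat_l; lra).
    assert (- (t * Rabs d) <= t * d).
    { destruct (Rle_dec 0 d). rewrite Rabs_right by lra. nra. rewrite Rabs_left by lra. nra. }
    nra. }
  exists t. split. split; auto. nra.
  exists (a + t*(a1-a)), (b + t*(b1-b)), (c + t*(c1-c)).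
  assert (Ra : Rabs (a1 - a) <= M) by (unfold M; pose proof (Rabs_pos (b1-b)); pose proof (Rabs_pos (c1-c)); lra).
  assert (Rb : Rabs (b1 - b) <= M) by (unfold M; pose proof (Rabs_pos (a1-a)); pose proof (Rabs_pos (c1-c)); lra).
  assert (Rc : Rabs (c1 - c) <= M) by (unfold M; pose proof (Rabs_pos (b1-b)); pose proof (Rabs_pos (a1-a)); lra).
  pose proof (Hbound _ Ra). pose proof (Hbound _ Rb). pose proof (Hbound _ Rc).
  unfold seg; simpl. repeat split; try lra.
  - transitivity ((a+b+c) + t*(1 - (a+b+c))); [unfold c1; ring| rewrite Hs; ring].
  - rewrite Hx, Ex. ring.
  - rewrite Hy, Ey. ring.
Qed.

Definition IntD (D : tri) q := Int3 (tA D) (tB D) (tC D) q.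
Lemma IntD_iff D q : in_tri_interior D q <-> IntD D q.
Proof. split; intro H; exact H. Qed.

Definition detZ (A B C : pt) : Z :=
  ((fst B - fst A) * (snd C - snd A) - (snd B - snd A) * (fst C - fst A))%Z.
Lemma detR_Z A B C : detR A B C = IZR (detZ A B C).
Proof. unfold detR, detZ, rx, ry. rewrite ?minus_IZR, ?mult_IZR, ?minus_IZR. ring. Qed.

Lemma noncol_detR D : noncollinear D -> detR (tA D) (tB D) (tC D) <> 0.
Proof. unfold noncollinear. intros H. rewrite detR_Z. apply not_0_IZR. exact H. Qed.

Lemma sides_sigma vs xi sigma i : Setup vs xi sigma -> (i < length vs)%nat -> inS sigma (side vs i).
Proof.
  intros (_&(_&Hb)&(_&Hx)) Hi. destruct (Hb i Hi) as (e & He & Hs).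
  destruct (Hx e He) as (f & Hf & Hs'). exists f. split; auto. eapply same_edge_trans; eauto.
Qed.

Lemma open_not_int vs xi sigma D e q : Setup vs xi sigma -> is_tri sigma D -> inS sigma e ->
  in_open_seg e q -> ~ IntD D q.
Proof.
  intros HS (_&_&_&_&HT) (f & Hf & Hs) Ho Hi. apply (HT f q Hf); auto. eapply open_same; eauto.
Qed.

Lemma side_not_int vs xi sigma D i q : Setup vs xi sigma -> is_tri sigma D -> (i < length vs)%nat ->
  in_closed_seg (side vs i) q -> ~ IntD D q.
Proof.
  intros HS HT Hi (t & Ht & Ex & Ey) HI.
  assert (Hsig := sides_sigma _ _ _ _ HS Hi).
  assert (HD := noncol_detR D (proj1 HT)).
  set (a := fst (side vs i)) in *. set (b := snd (side vs i)) in *.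
  destruct (Rle_lt_or_eq_dec 0 t (proj1 Ht)) as [Ht0|Ht0].
  - destruct (Rle_lt_or_eq_dec t 1 (proj2 Ht)) as [Ht1|Ht1].
    + apply (open_not_int _ _ _ D _ q HS HT Hsig); auto. exists t. split; [lra|]. split; auto.
    + subst t. destruct (Int3_open _ _ _ q (emb a) HD HI) as (t' & Ht' & HI').
      refine (open_not_int _ _ _ D _ _ HS HT Hsig _ HI').
      exists (1 - t'). unfold seg, emb; cbn [fst snd]. split; [lra|]. fold a b. rewrite Ex, Ey. split; ring.
  - subst t. destruct (Int3_open _ _ _ q (emb b) HD HI) as (t' & Ht' & HI').
    refine (open_not_int _ _ _ D _ _ HS HT Hsig _ HI').
    exists t'. unfold seg, emb; cbn [fst snd]. split; [lra|]. fold a b. rewrite Ex, Ey. split; ring.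
Qed.

Lemma Int3_ext A B C q q' : fst q = fst q' -> snd q = snd q' -> Int3 A B C q -> Int3 A B C q'.
Proof. destruct q, q'; simpl; intros; subst; auto. Qed.

Lemma side_end_L0 vs i : (i < length vs)%nat -> Lambda0 vs (fst (side vs i)) /\ Lambda0 vs (snd (side vs i)).
Proof.
  intros Hi. split; left; exists i; split; auto.
  - exists 0. unfold emb; simpl. split; [lra|]. split; ring.
  - exists 1. unfold emb; simpl. split; [lra|]. split; ring.
Qed.

Lemma parity_seg vs u v : (1 <= length vs)%nat ->
  (forall t, 0 <= t <= 1 -> ~ on_boundary vs (seg u v t)) ->
  Nat.odd (crossing_number vs u) = Nat.odd (crossing_number vs v).
Proof.
  intros Hn H. apply parity_invariance; auto.
  intros i Hi t s Ht Hs [E1 E2]. apply (H t Ht). exists i. split; auto.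
  exists s. unfold seg in *; simpl in *. repeat split; auto; lra.
Qed.

Lemma int_parity vs xi sigma D u v : Setup vs xi sigma -> is_tri sigma D -> IntD D u -> IntD D v ->
  Nat.odd (crossing_number vs u) = Nat.odd (crossing_number vs v).
Proof.
  intros HS HT Hu Hv. apply parity_seg.
  - destruct HS as ((H&_)&_). lia.
  - intros t Ht (i & Hi & Hc). apply (side_not_int _ _ _ D i _ HS HT Hi Hc).
    apply Int3_convex; auto.
Qed.

Lemma mid_not_boundary vs xi sigma e : Setup vs xi sigma -> inS sigma e ->
  (forall i, (i < length vs)%nat -> ~ same_edge e (side vs i)) -> ~ on_boundary vs (rmid e).
Proof.
  intros HS He Hns (i & Hi & (s & Hs & Ex & Ey)).
  destruct (inS_sigma_edge _ _ _ _ HS He) as (f & Hf & Hef & _ & Hav).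
  assert (Hmf : in_open_seg f (rmid e)) by (eapply open_same; eauto; apply rmid_open).
  destruct (Rle_lt_or_eq_dec 0 s (proj1 Hs)) as [Hs0|Hs0].
  - destruct (Rle_lt_or_eq_dec s 1 (proj2 Hs)) as [Hs1|Hs1].
    + destruct (inS_sigma_edge _ _ _ _ HS (sides_sigma _ _ _ _ HS Hi)) as (g & Hg & Hsg & _ & _).
      destruct (classic (same_edge f g)) as [Hfg|Hfg].
      * apply (Hns i Hi). eapply same_edge_trans; eauto. eapply same_edge_trans; eauto. apply same_edge_sym; auto.
      * destruct (sigma_adm _ _ _ HS) as [_ Hd]. apply (Hd f g Hf Hg Hfg (rmid e)). split; auto.
        eapply open_same; eauto. exists s. split; [lra|]. auto.
    + subst s. apply (Hav (snd (side vs i)) (proj2 (side_end_L0 vs i Hi))).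
      replace (emb (snd (side vs i))) with (rmid e); auto.
      destruct (rmid e). unfold emb; simpl in *. f_equal; lra.
  - subst s. apply (Hav (fst (side vs i)) (proj1 (side_end_L0 vs i Hi))).
    replace (emb (fst (side vs i))) with (rmid e); auto.
    destruct (rmid e). unfold emb; simpl in *. f_equal; lra.
Qed.

Lemma nonside_odd vs xi sigma D : Setup vs xi sigma -> is_tri sigma D ->
  (forall i, (i < length vs)%nat -> ~ same_edge (tA D, tB D) (side vs i)) ->
  exists q, IntD D q /\ Nat.odd (crossing_number vs q) = true.
Proof.
  intros HS HT Hns.
  assert (He : inS sigma (tA D, tB D)) by (destruct HT as (_&?&_); auto).
  assert (Hnb := mid_not_boundary _ _ _ _ HS He Hns).
  assert (Hin : inP vs (rmid (tA D, tB D))).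
  { destruct (inS_sigma_edge _ _ _ _ HS He) as (f & Hf & Hef & (_&_&_&Hop) & _).
    apply Hop. eapply open_same; eauto. apply rmid_open. }
  assert (Hodd : Nat.odd (crossing_number vs (rmid (tA D, tB D))) = true)
    by (destruct Hin; [contradiction|auto]).
  set (m := rmid (tA D, tB D)).
  assert (Hint : forall t, 0 < t < 1 -> IntD D (seg m (emb (tC D)) t)).
  { intros t Ht. eapply Int3_ext; [| |apply (Int3_edge _ _ _ (1/2) t)]; try lra;
    unfold seg, m, rmid, emb; simpl; field. }
  exists (seg m (emb (tC D)) (1/2)). split; [apply Hint; lra|].
  rewrite <- Hodd. symmetry. apply parity_seg.
  - destruct HS as ((H&_)&_). lia.
  - intros t Ht Hb. destruct (Rle_lt_or_eq_dec 0 t (proj1 Ht)) as [Ht0|Ht0].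
    + destruct Hb as (i & Hi & Hc). apply (side_not_int _ _ _ D i _ HS HT Hi Hc).
      eapply Int3_ext; [| |apply (Hint (t/2) ltac:(lra))]; unfold seg; simpl; field.
    + subst t. apply Hnb. replace (rmid (tA D, tB D)) with (seg m (seg m (emb (tC D)) (1 / 2)) 0); auto.
      unfold seg, m. destruct (rmid _). simpl. f_equal; ring.
Qed.

Open Scope R_scope.

Lemma crosses_sym q a b : crosses q (a,b) = crosses q (b,a).
Proof.
  unfold crosses; cbn [fst snd].
  destruct (Req_dec (ry a) (ry b)) as [E|E].
  - rewrite E, !Bool.eqb_reflx. auto.
  - pose proof (crR_swap (fst q) (snd q) (rx a) (ry a) (rx b) (ry b) E). unfold crR in H. exact H.
Qed.

Definition cn3 q (A B C : pt) : nat :=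
  (Nat.b2n (crosses q (A,B)) + Nat.b2n (crosses q (B,C)) + Nat.b2n (crosses q (C,A)))%nat.

Lemma cn3_rot q A B C : cn3 q A B C = cn3 q B C A.
Proof. unfold cn3. lia. Qed.
Lemma cn3_swap q A B C : cn3 q A B C = cn3 q B A C.
Proof. unfold cn3. rewrite (crosses_sym q A B), (crosses_sym q B C), (crosses_sym q C A). lia. Qed.

Lemma cn_list3 q x y z : crossing_number (x :: y :: z :: nil) q = cn3 q x y z.
Proof.
  unfold crossing_number, cn3. simpl. unfold side; simpl.
  destruct (crosses q (x,y)), (crosses q (y,z)), (crosses q (z,x)); reflexivity.
Qed.

Lemma succ_mod i n : (i < n)%nat -> ((i+1) mod n = i+1 /\ i + 1 < n \/ (i+1 = n /\ (i+1) mod n = 0))%nat.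
Proof.
  intros H. destruct (Nat.eq_dec (i+1) n) as [E|E].
  - right. split; auto. rewrite E. apply Nat.Div0.mod_same.
  - left. split; [apply Nat.mod_small|]; lia.
Qed.

Lemma side_adj vs i A B : NoDup vs -> (i < length vs)%nat -> same_edge (A,B) (side vs i) ->
  exists a b, (a < length vs)%nat /\ (b < length vs)%nat /\
    nth a vs (0%Z,0%Z) = A /\ nth b vs (0%Z,0%Z) = B /\
    ((a = i /\ b = (i+1) mod length vs) \/ (a = (i+1) mod length vs /\ b = i))%nat.
Proof.
  intros ND Hi Hs. assert (Hm : ((i+1) mod length vs < length vs)%nat) by (apply Nat.mod_upper_bound; lia).
  unfold side in Hs. destruct Hs as [H|H]; inversion H; subst.
  - exists i, ((i+1) mod length vs)%nat. repeat split; auto.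
  - exists ((i+1) mod length vs)%nat, i. repeat split; auto.
Qed.

Definition is_side vs (E : edge) := exists i, (i < length vs)%nat /\ same_edge E (side vs i).

Definition adj n x y := ((y = x + 1 \/ (x + 1 = n /\ y = 0)) \/ (x = y + 1 \/ (y + 1 = n /\ x = 0)))%nat.
Lemma tri_adj n a b c : (3 <= n -> a < n -> b < n -> c < n -> a <> b -> b <> c -> c <> a ->
  adj n a b -> adj n b c -> adj n c a -> n = 3)%nat.
Proof. unfold adj. intros. lia. Qed.

Lemma to_adj n i a b : (i < n)%nat -> ((a = i /\ b = (i+1) mod n) \/ (a = (i+1) mod n /\ b = i))%nat -> adj n a b.
Proof. intros Hi H. unfold adj. destruct (succ_mod i n Hi) as [[E1 E2]|[E1 E2]]; [rewrite E1 in H|rewrite E2 in H]; lia. Qed.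

Lemma three_sides vs A B C : NoDup vs -> (3 <= length vs)%nat -> A <> B -> B <> C -> C <> A ->
  is_side vs (A,B) -> is_side vs (B,C) -> is_side vs (C,A) ->
  forall q, crossing_number vs q = cn3 q A B C.
Proof.
  intros ND H3 HAB HBC HCA (i&Hi&Si) (j&Hj&Sj) (k&Hk&Sk) q.
  destruct (side_adj _ _ _ _ ND Hi Si) as (a&b&Ha&Hb&EA&EB&Hab).
  destruct (side_adj _ _ _ _ ND Hj Sj) as (b'&c&Hb'&Hc&EB'&EC&Hbc).
  destruct (side_adj _ _ _ _ ND Hk Sk) as (c'&a'&Hc'&Ha'&EC'&EA'&Hca).
  pose proof (proj1 (NoDup_nth vs (0%Z,0%Z)) ND) as Inj.
  assert (a' = a) by (apply Inj; congruence). assert (b' = b) by (apply Inj; congruence).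
  assert (c' = c) by (apply Inj; congruence). subst a' b' c'.
  assert (a <> b) by (intro; subst; congruence).
  assert (b <> c) by (intro; subst; congruence).
  assert (c <> a) by (intro; subst; congruence).
  apply to_adj in Hab, Hbc, Hca; auto.
  assert (Hn := tri_adj _ _ _ _ H3 Ha Hb Hc H H0 H1 Hab Hbc Hca).
  destruct vs as [|v0 [|v1 [|v2 [|v3 l]]]]; simpl in Hn; try lia.
  rewrite cn_list3.
  pose proof (cn3_rot q v0 v1 v2). pose proof (cn3_rot q v1 v2 v0).
  pose proof (cn3_swap q v0 v1 v2). pose proof (cn3_swap q v1 v2 v0). pose proof (cn3_swap q v2 v0 v1).
  simpl in Ha, Hb, Hc.
  assert (Ha3 : (a = 0 \/ a = 1 \/ a = 2)%nat) by lia.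
  assert (Hb3 : (b = 0 \/ b = 1 \/ b = 2)%nat) by lia.
  assert (Hc3 : (c = 0 \/ c = 1 \/ c = 2)%nat) by lia.
  destruct Ha3 as [ -> | [ -> | -> ] ]; destruct Hb3 as [ -> | [ -> | -> ] ]; destruct Hc3 as [ -> | [ -> | -> ] ];
  try lia; simpl in EA, EB, EC; subst; lia.
Qed.

Lemma tri_core A B C y0 : detR A B C <> 0 ->
  ry B <> ry A -> ry C <> ry A ->
  0 < (y0 - ry A)/(ry B - ry A) < 1 -> 0 < (y0 - ry A)/(ry C - ry A) < 1 ->
  Bool.eqb (Rltb y0 (ry A)) (Rltb y0 (ry B)) = false ->
  Bool.eqb (Rltb y0 (ry B)) (Rltb y0 (ry C)) = true ->
  Bool.eqb (Rltb y0 (ry C)) (Rltb y0 (ry A)) = false ->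
  exists q, Int3 A B C q /\ cn3 q A B C = 1%nat.
Proof.
  intros HD HB HC Hs1 Hs2 E1 E2 E3.
  set (s1 := (y0 - ry A)/(ry B - ry A)) in *. set (s2 := (y0 - ry A)/(ry C - ry A)) in *.
  set (X1 := rx A + s1 * (rx B - rx A)). set (X2 := rx A + s2 * (rx C - rx A)).
  assert (HX : X1 <> X2).
  { intro HX. apply HD.
    assert (F1 : s1 * (ry B - ry A) = y0 - ry A) by (unfold s1; field; lra).
    assert (F2 : s2 * (ry C - ry A) = y0 - ry A) by (unfold s2; field; lra).
    assert (F3 : s1 * (rx B - rx A) = s2 * (rx C - rx A)) by (unfold X1, X2 in HX; lra).
    assert (F : s1 * s2 * detR A B C = 0).
    { unfold detR. transitivity ((s1*(rx B - rx A))*(s2*(ry C - ry A)) - (s1*(ry B - ry A))*(s2*(rx C - rx A))); [ring|].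
      rewrite F1, F2, F3. ring. }
    apply Rmult_integral in F as [F|F]; auto. apply Rmult_integral in F as [F|F]; lra. }
  exists ((X1 + X2)/2, y0). split.
  - exists (1 - s1/2 - s2/2), (s1/2), (s2/2). simpl. repeat split; try lra.
    + unfold X1, X2. field.
    + assert (F1 : s1 * (ry B - ry A) = y0 - ry A) by (unfold s1; field; lra).
      assert (F2 : s2 * (ry C - ry A) = y0 - ry A) by (unfold s2; field; lra). lra.
  - unfold cn3, crosses; cbn [fst snd]. rewrite E1, E2, E3.
    replace (rx A + (y0 - ry A) * (rx B - rx A) / (ry B - ry A)) with X1 by (unfold X1, s1; field; lra).
    replace (rx C + (y0 - ry C) * (rx A - rx C) / (ry A - ry C)) with X2 by (unfold X2, s2; field; lra).
    unfold Rltb. destruct (Rlt_dec ((X1 + X2)/2) X1); destruct (Rlt_dec ((X1 + X2)/2) X2); simpl; first [reflexivity | exfalso; apply HX; lra].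
Qed.

Lemma detR_rot A B C : detR A B C = detR B C A.
Proof. unfold detR. ring. Qed.
Lemma detR_swap A B C : detR A B C = - detR B A C.
Proof. unfold detR. ring. Qed.

Lemma IZR_lt_half a b : (a < b)%Z -> IZR a + 1/2 < IZR b.
Proof. intros H. assert (H' : (a + 1 <= b)%Z) by lia. apply IZR_le in H'. rewrite plus_IZR in H'. lra. Qed.

Lemma tri_low A B C : detR A B C <> 0 -> (snd A < snd B)%Z -> (snd A < snd C)%Z ->
  exists q, Int3 A B C q /\ cn3 q A B C = 1%nat.
Proof.
  intros HD HB HC. pose proof (IZR_lt_half _ _ HB) as B1. pose proof (IZR_lt_half _ _ HC) as C1.
  unfold ry in *. apply (tri_core A B C (IZR (snd A) + 1/2)); auto; unfold ry; try lra.
  - split. apply Rdiv_lt_0_compat; lra. apply Rmult_lt_reg_r with (IZR (snd B) - IZR (snd A)); [lra|].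
    field_simplify; lra.
  - split. apply Rdiv_lt_0_compat; lra. apply Rmult_lt_reg_r with (IZR (snd C) - IZR (snd A)); [lra|].
    field_simplify; lra.
  - rlt; simpl; auto; lra.
  - rlt; simpl; auto; lra.
  - rlt; simpl; auto; lra.
Qed.

Lemma tri_high A B C : detR A B C <> 0 -> (snd B < snd A)%Z -> (snd C < snd A)%Z ->
  exists q, Int3 A B C q /\ cn3 q A B C = 1%nat.
Proof.
  intros HD HB HC. pose proof (IZR_lt_half _ _ HB) as B1. pose proof (IZR_lt_half _ _ HC) as C1.
  unfold ry in *. apply (tri_core A B C (IZR (snd A) - 1/2)); auto; unfold ry; try lra.
  - split. apply Rmult_lt_reg_r with (IZR (snd A) - IZR (snd B)); [lra|].
    replace ((IZR (snd A) - 1 / 2 - IZR (snd A)) / (IZR (snd B) - IZR (snd A)) * (IZR (snd A) - IZR (snd B))) with (1/2) by (field; lra). lra.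
    apply Rmult_lt_reg_r with (IZR (snd A) - IZR (snd B)); [lra|].
    replace ((IZR (snd A) - 1 / 2 - IZR (snd A)) / (IZR (snd B) - IZR (snd A)) * (IZR (snd A) - IZR (snd B))) with (1/2) by (field; lra). lra.
  - split. apply Rmult_lt_reg_r with (IZR (snd A) - IZR (snd C)); [lra|].
    replace ((IZR (snd A) - 1 / 2 - IZR (snd A)) / (IZR (snd C) - IZR (snd A)) * (IZR (snd A) - IZR (snd C))) with (1/2) by (field; lra). lra.
    apply Rmult_lt_reg_r with (IZR (snd A) - IZR (snd C)); [lra|].
    replace ((IZR (snd A) - 1 / 2 - IZR (snd A)) / (IZR (snd C) - IZR (snd A)) * (IZR (snd A) - IZR (snd C))) with (1/2) by (field; lra). lra.
  - rlt; simpl; auto; lra.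
  - rlt; simpl; auto; lra.
  - rlt; simpl; auto; lra.
Qed.

Lemma tri3 A B C : detR A B C <> 0 -> exists q, Int3 A B C q /\ Nat.odd (cn3 q A B C) = true.
Proof.
  intros HD.
  assert (HR1 : detR B C A <> 0) by (rewrite <- detR_rot; auto).
  assert (HR2 : detR C A B <> 0) by (rewrite <- detR_rot; auto).
  assert (Hne : ~ (snd A = snd B /\ snd B = snd C)).
  { intros [E1 E2]. apply HD. unfold detR, ry. rewrite E1, E2. ring. }
  assert (Hc : ((snd A < snd B /\ snd A < snd C) \/ (snd B < snd C /\ snd B < snd A) \/ (snd C < snd A /\ snd C < snd B)
    \/ (snd B < snd A /\ snd C < snd A) \/ (snd C < snd B /\ snd A < snd B) \/ (snd A < snd C /\ snd B < snd C))%Z) by lia.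
  destruct Hc as [[H1 H2]|[[H1 H2]|[[H1 H2]|[[H1 H2]|[[H1 H2]|[H1 H2]]]]]].
  - destruct (tri_low A B C HD H1 H2) as (q & Hq & Hc). exists q. rewrite Hc. auto.
  - destruct (tri_low B C A HR1 H1 H2) as (q & Hq & Hc). exists q.
    rewrite cn3_rot, Hc. split; auto. do 2 apply Int3_rot. auto.
  - destruct (tri_low C A B HR2 H1 H2) as (q & Hq & Hc). exists q.
    rewrite cn3_rot, cn3_rot, Hc. split; auto. apply Int3_rot. auto.
  - destruct (tri_high A B C HD H1 H2) as (q & Hq & Hc). exists q. rewrite Hc. auto.
  - destruct (tri_high B C A HR1 H1 H2) as (q & Hq & Hc). exists q.
    rewrite cn3_rot, Hc. split; auto. do 2 apply Int3_rot. auto.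
  - destruct (tri_high C A B HR2 H1 H2) as (q & Hq & Hc). exists q.
    rewrite cn3_rot, cn3_rot, Hc. split; auto. apply Int3_rot. auto.
Qed.

Definition rotT (D : tri) : tri := ((tB D, tC D), tA D).

Lemma IntD_rot D q : IntD (rotT D) q -> IntD D q.
Proof. unfold IntD, rotT, tA, tB, tC; simpl. intro H. do 2 apply Int3_rot. exact H. Qed.

Lemma is_tri_rot sigma D : is_tri sigma D -> is_tri sigma (rotT D).
Proof.
  intros (Hn & H1 & H2 & H3 & H4). unfold rotT; repeat split; unfold tA, tB, tC in *; simpl in *; auto.
  - unfold noncollinear, tA, tB, tC in *; simpl in *. intro E; apply Hn. lia.
  - intros e q He Ho Hi. apply (H4 e q He Ho). apply IntD_rot. exact Hi.
Qed.

Lemma noside_all vs E : ~ is_side vs E -> forall i, (i < length vs)%nat -> ~ same_edge E (side vs i).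
Proof. intros H i Hi Hs. apply H. exists i. auto. Qed.

Lemma int_inP vs xi sigma D q : Setup vs xi sigma -> is_tri sigma D -> IntD D q -> inP vs q.
Proof.
  intros HS HT Hq. right.
  assert (Hq0 : exists q0, IntD D q0 /\ Nat.odd (crossing_number vs q0) = true).
  { destruct (classic (is_side vs (tA D, tB D))) as [S1|S1];
    [|apply (nonside_odd vs xi sigma D HS HT); apply noside_all; auto].
    destruct (classic (is_side vs (tB D, tC D))) as [S2|S2].
    2:{ destruct (nonside_odd vs xi sigma (rotT D) HS (is_tri_rot _ _ HT)) as (q0 & H0 & H0').
        apply noside_all; auto. exists q0; split; auto. apply IntD_rot; auto. }
    destruct (classic (is_side vs (tC D, tA D))) as [S3|S3].
    2:{ destruct (nonside_odd vs xi sigma (rotT (rotT D)) HS (is_tri_rot _ _ (is_tri_rot _ _ HT))) as (q0 & H0 & H0').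
        apply noside_all; auto. exists q0; split; auto. do 2 apply IntD_rot; auto. }
    destruct HT as (Hn & _).
    assert (HD := noncol_detR D Hn).
    assert (HAB : tA D <> tB D) by (intro E; apply HD; rewrite E; unfold detR; ring).
    assert (HBC : tB D <> tC D) by (intro E; apply HD; rewrite E; unfold detR; ring).
    assert (HCA : tC D <> tA D) by (intro E; apply HD; rewrite E; unfold detR; ring).
    destruct HS as ((H3 & ND & _) & _).
    destruct (tri3 _ _ _ HD) as (q0 & Hq0 & Ho). exists q0. split; auto.
    rewrite (three_sides vs (tA D) (tB D) (tC D)); auto. }
  destruct Hq0 as (q0 & Hq0 & Ho). rewrite <- Ho. symmetry. eapply int_parity; eauto.
Qed.

Open Scope Z_scope.

Lemma prim_contra a b x y T D : Z.gcd a b = 1 -> 0 < T < D -> D*x = T*a -> D*y = T*b -> False.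
Proof.
  intros Hg HT Hx Hy. destruct (Z.gcd_bezout _ _ _ Hg) as (u & v & Huv).
  assert (E : D * (u*x + v*y) = T).
  { transitivity (u*(D*x) + v*(D*y)); [ring|]. rewrite Hx, Hy.
    transitivity (T*(u*a+v*b)); [ring|]. rewrite Huv; ring. }
  set (k := u*x + v*y) in *. destruct (Z.le_gt_cases k 0); nia.
Qed.

Lemma lattice_pt u1 u2 v1 v2 :
  Z.gcd u1 u2 = 1 -> Z.gcd v1 v2 = 1 -> Z.gcd (v1 - u1) (v2 - u2) = 1 ->
  2 <= Z.abs (u1*v2 - u2*v1) ->
  exists w1 w2 S T, 0 < S /\ 0 < T /\ S + T < Z.abs (u1*v2 - u2*v1) /\
    Z.abs (u1*v2 - u2*v1) * w1 = S*u1 + T*v1 /\ Z.abs (u1*v2 - u2*v1) * w2 = S*u2 + T*v2.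
Proof.
  intros Gu Gv Guv Hd.
  set (d := u1*v2 - u2*v1) in *. set (D := Z.abs d) in *.
  assert (HD : 0 < D) by lia.
  assert (Hchoice : exists e1 e2, (e1*v2 - e2*v1) mod D <> 0 \/ (u1*e2 - u2*e1) mod D <> 0).
  { destruct (Z.eq_dec (v2 mod D) 0) as [A1|A1]; [|exists 1, 0; left; rewrite Z.mul_1_l, Z.mul_0_l, Z.sub_0_r; auto].
    destruct (Z.eq_dec (u2 mod D) 0) as [A2|A2].
    2:{ exists 1, 0. right. replace (u1*0 - u2*1) with (-u2) by ring. intro E.
        apply A2. apply Z.mod_opp_l_z in E; [|lia]. rewrite Z.opp_involutive in E. auto. }
    destruct (Z.eq_dec (v1 mod D) 0) as [A3|A3].
    2:{ exists 0, 1. left. replace (0*v2 - 1*v1) with (-v1) by ring. intro E.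
        apply A3. apply Z.mod_opp_l_z in E; [|lia]. rewrite Z.opp_involutive in E. auto. }
    destruct (Z.eq_dec (u1 mod D) 0) as [A4|A4].
    2:{ exists 0, 1. right. replace (u1*1 - u2*0) with u1 by ring. auto. }
    exfalso. apply Z.mod_divide in A2, A4; try lia.
    assert (Hdv : (D | Z.gcd u1 u2)) by (apply Z.gcd_greatest; auto).
    rewrite Gu in Hdv. apply Z.divide_pos_le in Hdv; lia. }
  destruct Hchoice as (e1 & e2 & He).
  set (S := e1*v2 - e2*v1). set (T := u1*e2 - u2*e1). fold S T in He.
  assert (Cr1 : d * e1 = S*u1 + T*v1) by (unfold d, S, T; ring).
  assert (Cr2 : d * e2 = S*u2 + T*v2) by (unfold d, S, T; ring).
  set (S' := S mod D). set (T' := T mod D).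
  assert (HS' : 0 <= S' < D) by (apply Z.mod_pos_bound; lia).
  assert (HT' : 0 <= T' < D) by (apply Z.mod_pos_bound; lia).
  assert (ES : S = D * (S / D) + S') by (apply Z.div_mod; lia).
  assert (ET : T = D * (T / D) + T') by (apply Z.div_mod; lia).
  set (qs := S / D) in *. set (qt := T / D) in *.
  assert (Heps : exists eps, d = eps * D /\ (eps = 1 \/ eps = -1)).
  { destruct (Z.le_gt_cases 0 d); [exists 1|exists (-1)]; unfold D; split; try lia. }
  destruct Heps as (eps & Hde & Heps).
  set (x1 := eps*e1 - qs*u1 - qt*v1). set (x2 := eps*e2 - qs*u2 - qt*v2).
  assert (Dqs : D*qs = S - S') by lia. assert (Dqt : D*qt = T - T') by lia.
  assert (Ex1 : D * x1 = S'*u1 + T'*v1).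
  { transitivity (d*e1 - (D*qs)*u1 - (D*qt)*v1). { unfold x1; rewrite Hde; ring. }
    rewrite Dqs, Dqt, Cr1; ring. }
  assert (Ex2 : D * x2 = S'*u2 + T'*v2).
  { transitivity (d*e2 - (D*qs)*u2 - (D*qt)*v2). { unfold x2; rewrite Hde; ring. }
    rewrite Dqs, Dqt, Cr2; ring. }
  assert (HST : S' <> 0 \/ T' <> 0) by (unfold S', T'; destruct He; auto).
  destruct (Z.eq_dec S' 0) as [S0|S0].
  { exfalso. rewrite S0 in Ex1, Ex2. apply (prim_contra v1 v2 x1 x2 T' D Gv); lia. }
  destruct (Z.eq_dec T' 0) as [T0|T0].
  { exfalso. rewrite T0 in Ex1, Ex2. apply (prim_contra u1 u2 x1 x2 S' D Gu); lia. }
  destruct (Z.lt_total (S' + T') D) as [Hlt|[Heq|Hgt]].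
  - exists x1, x2, S', T'. repeat split; lia.
  - exfalso. apply (prim_contra (v1-u1) (v2-u2) (v1 - x1) (v2 - x2) S' D Guv); [lia| |].
    + rewrite Z.mul_sub_distr_l, Ex1. replace T' with (D - S') by lia. ring.
    + rewrite Z.mul_sub_distr_l, Ex2. replace T' with (D - S') by lia. ring.
  - exists (u1 + v1 - x1), (u2 + v2 - x2), (D - S'), (D - T'). repeat split; try lia.
Qed.

Open Scope R_scope.

Lemma t_lemma a b m n t : Z.gcd a b = 1%Z -> 0 < t < 1 -> IZR m = t*IZR a -> IZR n = t*IZR b -> False.
Proof.
  intros Hg Ht Hm Hn. destruct (Z.gcd_bezout _ _ _ Hg) as (u & v & Huv).
  assert (E : IZR (u*m + v*n) = t).
  { rewrite plus_IZR, !mult_IZR, Hm, Hn.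
    transitivity (t * IZR (u*a + v*b)); [rewrite plus_IZR, !mult_IZR; ring|]. rewrite Huv. simpl. ring. }
  rewrite <- E in Ht. destruct Ht as [H1 H2]. apply lt_IZR in H1. apply lt_IZR in H2. lia.
Qed.

Lemma vertex_L0 vs xi sigma P Q : Setup vs xi sigma -> inS sigma (P,Q) -> Lambda0 vs P /\ Lambda0 vs Q.
Proof.
  intros HS H. destruct (inS_sigma_edge _ _ _ _ HS H) as (f & _ & Hs & (_&H1&H2&_) & _).
  destruct f as [f1 f2]. destruct Hs as [E|E]; inversion E; subst; simpl in *; auto.
Qed.

Lemma edge_prim vs xi sigma P Q : Setup vs xi sigma -> inS sigma (P,Q) -> P <> Q ->
  Z.gcd (fst Q - fst P) (snd Q - snd P) = 1%Z.
Proof.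
  intros HS H HPQ.
  destruct (inS_sigma_edge _ _ _ _ HS H) as (f & _ & Hs & (_&_&_&Hop) & Hav).
  set (dx := (fst Q - fst P)%Z). set (dy := (snd Q - snd P)%Z).
  set (g := Z.gcd dx dy). assert (Hg0 := Z.gcd_nonneg dx dy). fold g in Hg0.
  destruct (Z.eq_dec g 0) as [G0|G0].
  { exfalso. apply Z.gcd_eq_0 in G0. destruct P, Q; unfold dx, dy in G0; simpl in G0. apply HPQ. f_equal; lia. }
  destruct (Z.eq_dec g 1) as [G1|G1]; auto. exfalso.
  destruct (Z.gcd_divide_l dx dy) as [kx Hkx]. destruct (Z.gcd_divide_r dx dy) as [ky Hky]. fold g in Hkx, Hky.
  set (z := (fst P + kx, snd P + ky)%Z).
  assert (Hz : in_open_seg (P,Q) (emb z)).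
  { exists (1 / IZR g). assert (Hgr : 2 <= IZR g) by (apply IZR_le; lia). split.
    - split. apply Rdiv_lt_0_compat; lra. apply Rmult_lt_reg_r with (IZR g); [lra|]. field_simplify; lra.
    - unfold emb, z, rx, ry; simpl. rewrite !plus_IZR. split.
      + replace (IZR (fst Q)) with (IZR (fst P) + IZR kx * IZR g).
        field. lra. rewrite <- mult_IZR, <- Hkx. unfold dx. rewrite minus_IZR. ring.
      + replace (IZR (snd Q)) with (IZR (snd P) + IZR ky * IZR g).
        field. lra. rewrite <- mult_IZR, <- Hky. unfold dy. rewrite minus_IZR. ring. }
  apply (Hav z). apply Hop. all: eapply open_same; eauto.
Qed.

Lemma Int3_vertex A B C q t : Int3 A B C q -> 0 < t <= 1 -> Int3 A B C (seg (emb A) q t).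
Proof.
  intros (a&b&c&Ha&Hb&Hc&Hs&Hx&Hy) Ht. exists (1 - t + t*a), (t*b), (t*c).
  unfold seg, emb; simpl. rewrite Hx, Hy. repeat split; try nra.
Qed.

Lemma tri_maximal vs xi sigma : Setup vs xi sigma -> forall e, is_edge vs e -> avoids_Lambda0 vs e ->
  (forall e', sigma e' -> ~ same_edge e e' -> disjoint_edges e e') -> inS sigma e.
Proof. intros (_&_&((_&H)&_)). exact H. Qed.

Lemma no_int_lattice vs xi sigma D r : Setup vs xi sigma -> is_tri sigma D -> IntD D (emb r) -> False.
Proof.
  intros HS HT Hr.
  assert (HT' := HT). destruct HT' as (Hn & HAB & _ & _ & _).
  set (A := tA D) in *.
  assert (HD := noncol_detR D Hn).
  destruct (classic (r = A)) as [E|E].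
  { subst r. destruct (Int3_open _ _ _ _ (emb (tB D)) HD Hr) as (t & Ht & Hi).
    apply (open_not_int _ _ _ D _ (seg (emb A) (emb (tB D)) t) HS HT HAB); auto.
    exists t. unfold seg, emb; simpl. split; auto. }
  set (w1 := (fst r - fst A)%Z). set (w2 := (snd r - snd A)%Z).
  set (g := Z.gcd w1 w2). assert (Hg0 := Z.gcd_nonneg w1 w2). fold g in Hg0.
  destruct (Z.eq_dec g 0) as [G0|G0].
  { apply Z.gcd_eq_0 in G0. apply E. destruct r, A; unfold w1, w2 in G0; simpl in G0. f_equal; lia. }
  destruct (Z.gcd_divide_l w1 w2) as [kx Hkx]. destruct (Z.gcd_divide_r w1 w2) as [ky Hky]. fold g in Hkx, Hky.
  assert (Hk : Z.gcd kx ky = 1%Z).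
  { assert (H := Z.gcd_div_gcd w1 w2 g G0 eq_refl). rewrite Hkx, Hky in H at 1.
    rewrite !Z.div_mul in H by auto. exact H. }
  set (p := (fst A + kx, snd A + ky)%Z).
  assert (Hgr : 1 <= IZR g) by (apply IZR_le; lia).
  assert (Ep : emb p = seg (emb A) (emb r) (1 / IZR g)).
  { unfold emb, seg, p, rx, ry; simpl. rewrite !plus_IZR. f_equal.
    - replace (IZR (fst r)) with (IZR (fst A) + IZR kx * IZR g). field. lra.
      rewrite <- mult_IZR, <- Hkx. unfold w1. rewrite minus_IZR. ring.
    - replace (IZR (snd r)) with (IZR (snd A) + IZR ky * IZR g). field. lra.
      rewrite <- mult_IZR, <- Hky. unfold w2. rewrite minus_IZR. ring. }
  assert (Hp : IntD D (emb p)).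
  { rewrite Ep. apply Int3_vertex; auto. split. apply Rdiv_lt_0_compat; lra.
    apply Rmult_le_reg_r with (IZR g); [lra|]. field_simplify; lra. }
  assert (Hopen : forall q, in_open_seg (A, p) q -> IntD D q).
  { intros q (t & Ht & Ex & Ey). eapply Int3_ext; [| |apply (Int3_vertex _ _ _ (emb p) t Hp ltac:(lra))];
    unfold seg, emb; simpl in *; [rewrite Ex|rewrite Ey]; unfold A; ring. }
  assert (HAp : A <> p).
  { intro Ea. assert (kx = 0%Z /\ ky = 0%Z) as [K1 K2].
    { unfold p in Ea. destruct A. inversion Ea. simpl. lia. }
    rewrite K1, K2 in Hk. simpl in Hk. discriminate. }
  assert (Hin : inS sigma (A, p)).
  { apply (tri_maximal _ _ _ HS).
    - repeat split; auto.
      + unfold A. destruct HT as (_ & H1 & _). exact (proj1 (vertex_L0 _ _ _ _ _ HS H1)).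
      + apply (int_inP _ _ _ D _ HS HT Hp).
      + intros q Hq. apply (int_inP _ _ _ D _ HS HT (Hopen q Hq)).
    - intros z _ (t & Ht & Ex & Ey). apply (t_lemma kx ky (fst z - fst A) (snd z - snd A) t Hk Ht).
      + unfold emb, rx, p in *; simpl in *. rewrite minus_IZR, Ex, plus_IZR. ring.
      + unfold emb, ry, p in *; simpl in *. rewrite minus_IZR, Ey, plus_IZR. ring.
    - intros e' He' _ q [Hq Hq']. apply (open_not_int _ _ _ D e' q HS HT); auto.
      exists e'; split; auto. apply same_edge_refl. }
  apply (open_not_int _ _ _ D (A,p) (rmid (A,p)) HS HT Hin (rmid_open _)).
  apply Hopen. apply rmid_open.
Qed.

Lemma unimod vs xi sigma D : Setup vs xi sigma -> is_tri sigma D ->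
  Z.abs (detZ (tA D) (tB D) (tC D)) = 1%Z.
Proof.
  intros HS HT. assert (HT' := HT). destruct HT' as (Hn & H1 & H2 & H3 & _).
  assert (HD := noncol_detR D Hn).
  set (A := tA D) in *. set (B := tB D) in *. set (C := tC D) in *.
  assert (HAB : A <> B) by (intro E; apply HD; rewrite E; unfold detR; ring).
  assert (HBC : B <> C) by (intro E; apply HD; rewrite E; unfold detR; ring).
  assert (HCA : C <> A) by (intro E; apply HD; rewrite E; unfold detR; ring).
  assert (Gu := edge_prim _ _ _ _ _ HS H1 HAB).
  assert (Gw := edge_prim _ _ _ _ _ HS H2 HBC).
  assert (Gv := edge_prim _ _ _ _ _ HS H3 HCA).
  assert (Gv' : Z.gcd (fst C - fst A) (snd C - snd A) = 1%Z).
  { rewrite <- Z.gcd_opp_l, <- Z.gcd_opp_r. rewrite <- Gv. f_equal; ring. }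
  assert (Gw' : Z.gcd ((fst C - fst A) - (fst B - fst A)) ((snd C - snd A) - (snd B - snd A)) = 1%Z).
  { rewrite <- Gw. f_equal; ring. }
  unfold noncollinear in Hn. fold A B C in Hn.
  destruct (Z.eq_dec (Z.abs (detZ A B C)) 1) as [E|E]; auto. exfalso.
  assert (H2d : (2 <= Z.abs ((fst B - fst A) * (snd C - snd A) - (snd B - snd A) * (fst C - fst A)))%Z).
  { unfold detZ in E. lia. }
  destruct (lattice_pt _ _ _ _ Gu Gv' Gw' H2d) as (w1 & w2 & S & T & HS0 & HT0 & HST & E1 & E2).
  set (Dd := Z.abs ((fst B - fst A) * (snd C - snd A) - (snd B - snd A) * (fst C - fst A))) in *.
  apply (no_int_lattice vs xi sigma D (fst A + w1, snd A + w2)%Z HS HT).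
  assert (HDr : 2 <= IZR Dd) by (apply IZR_le; lia).
  assert (HSr : 0 < IZR S) by (apply IZR_lt; lia).
  assert (HTr : 0 < IZR T) by (apply IZR_lt; lia).
  assert (HSTr : IZR S + IZR T < IZR Dd) by (rewrite <- plus_IZR; apply IZR_lt; lia).
  apply IZR_eq in E1, E2. rewrite !mult_IZR, !plus_IZR, !mult_IZR, !minus_IZR in E1, E2.
  exists ((IZR Dd - IZR S - IZR T) / IZR Dd), (IZR S / IZR Dd), (IZR T / IZR Dd).
  repeat split.
  - apply Rdiv_lt_0_compat; lra.
  - apply Rdiv_lt_0_compat; lra.
  - apply Rdiv_lt_0_compat; lra.
  - field; lra.
  - unfold emb, rx; simpl. rewrite plus_IZR. fold A B C.
    apply Rmult_eq_reg_r with (IZR Dd); [|lra].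
    replace ((IZR (fst A) + IZR w1) * IZR Dd) with (IZR (fst A) * IZR Dd + IZR Dd * IZR w1) by ring.
    rewrite E1. field. lra.
  - unfold emb, ry; simpl. rewrite plus_IZR. fold A B C.
    apply Rmult_eq_reg_r with (IZR Dd); [|lra].
    replace ((IZR (snd A) + IZR w2) * IZR Dd) with (IZR (snd A) * IZR Dd + IZR Dd * IZR w2) by ring.
    rewrite E2. field. lra.
Qed.

Open Scope Z_scope.
Definition L1 (a b : Z) := Z.abs a + Z.abs b.

Definition GP (z1 z2 p1 p2 k : Z) : Prop :=
  Z.max (L1 p1 p2) (L1 (p1-z1) (p2-z2)) > L1 z1 z2 ->
  L1 z1 z2 >= Z.min (L1 p1 p2) (L1 (p1-z1) (p2-z2)) ->
  L1 z1 z2 >= L1 (k*z1 - p1) (k*z2-p2) ->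
  L1 z1 z2 >= L1 ((k-1)*z1 - p1) ((k-1)*z2-p2) ->
  Z.min (L1 (k*z1 - p1) (k*z2-p2)) (L1 ((k-1)*z1 - p1) ((k-1)*z2-p2))
  <= Z.min (L1 p1 p2) (L1 (p1-z1) (p2-z2)).

Lemma lemG_k (z1 z2 p1 p2 : Z) (k:Z) :
  Z.max (L1 p1 p2) (L1 (p1-z1) (p2-z2)) > L1 z1 z2 ->
  L1 z1 z2 >= Z.min (L1 p1 p2) (L1 (p1-z1) (p2-z2)) ->
  L1 z1 z2 >= L1 (k*z1 - p1) (k*z2-p2) -> -3 <= k <= 3.
Proof.
  unfold L1; intros H1 H2 H3.
  assert (H : Z.abs (k*z1) + Z.abs (k*z2) <= 3 * (Z.abs z1 + Z.abs z2)).
  { pose proof (Z.abs_triangle (k*z1-p1) p1). pose proof (Z.abs_triangle (k*z2-p2) p2).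
    replace (k*z1-p1+p1) with (k*z1) in * by ring.
    replace (k*z2-p2+p2) with (k*z2) in * by ring.
    pose proof (Z.abs_triangle (p1-z1) z1). pose proof (Z.abs_triangle (p2-z2) z2).
    replace (p1-z1+z1) with p1 in * by ring.
    replace (p2-z2+z2) with p2 in * by ring.
    pose proof (Z.abs_triangle p1 (-z1)).
    pose proof (Z.abs_triangle p2 (-z2)). rewrite Z.abs_opp in *.
    destruct (Z.max_spec (Z.abs p1 + Z.abs p2) (Z.abs (p1 - z1) + Z.abs (p2 - z2)));
    destruct (Z.min_spec (Z.abs p1 + Z.abs p2) (Z.abs (p1 - z1) + Z.abs (p2 - z2))); lia. }
  rewrite !Z.abs_mul in H.
  assert (0 < Z.abs z1 + Z.abs z2).
  { destruct (Z.eq_dec z1 0); destruct (Z.eq_dec z2 0); first [lia | subst; rewrite !Z.sub_0_r in *; lia]. }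
  rewrite <- Z.mul_add_distr_l in H.
  assert (Z.abs k <= 3) by nia. lia.
Qed.

Lemma GP_core z1 z2 p1 p2 k : 0 <= z1 -> 0 <= z2 -> GP z1 z2 p1 p2 k.
Proof.
  intros Hz1 Hz2 H1 H2 H3 H4. assert (Hk := lemG_k _ _ _ _ k H1 H2 H3).
  revert H1 H2 H3 H4. unfold L1. rewrite (Z.abs_eq z1), (Z.abs_eq z2) by lia.
  assert (k = -3 \/ k = -2 \/ k = -1 \/ k = 0 \/ k = 1 \/ k = 2 \/ k = 3) as Hc by lia.
  destruct Hc as [E|[E|[E|[E|[E|[E|E]]]]]]; subst k; intros; lia.
Qed.

Lemma absneg x y : x = - y -> Z.abs x = Z.abs y.
Proof. intros ->. apply Z.abs_opp. Qed.

Lemma GP_flip1 z1 z2 p1 p2 k : GP (-z1) z2 (-p1) p2 k -> GP z1 z2 p1 p2 k.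
Proof.
  unfold GP, L1. intros H.
  rewrite (absneg (-z1) z1), (absneg (-p1) p1), (absneg (-p1 - -z1) (p1 - z1)),
    (absneg (k * - z1 - - p1) (k*z1 - p1)), (absneg ((k-1) * - z1 - - p1) ((k-1)*z1 - p1)) in H by ring.
  exact H.
Qed.
Lemma GP_flip2 z1 z2 p1 p2 k : GP z1 (-z2) p1 (-p2) k -> GP z1 z2 p1 p2 k.
Proof.
  unfold GP, L1. intros H.
  rewrite (absneg (-z2) z2), (absneg (-p2) p2), (absneg (-p2 - -z2) (p2 - z2)),
    (absneg (k * - z2 - - p2) (k*z2 - p2)), (absneg ((k-1) * - z2 - - p2) ((k-1)*z2 - p2)) in H by ring.
  exact H.
Qed.

Lemma lemG z1 z2 p1 p2 k : GP z1 z2 p1 p2 k.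
Proof.
  destruct (Z.le_gt_cases 0 z1); destruct (Z.le_gt_cases 0 z2).
  - apply GP_core; auto.
  - apply GP_flip2, GP_core; lia.
  - apply GP_flip1, GP_core; lia.
  - apply GP_flip1, GP_flip2, GP_core; lia.
Qed.

Lemma q1 a b c d : 0 <= a -> 0 <= b -> 0 <= c -> 0 <= d -> a + b = c + d ->
  Z.abs (a-c) + Z.abs (b-d) <= a + b -> (a*d - b*c = 1 \/ a*d - b*c = -1) -> False.
Proof.
  intros Ha Hb Hc Hd E H Hdet.
  assert (F : (a+b)*(a-c) = a*d - b*c) by (replace d with (a+b-c) by lia; ring).
  destruct Hdet as [Hdet|Hdet].
  - rewrite <- F in Hdet. apply Z.eq_mul_1_nonneg in Hdet; lia.
  - assert (G : (a+b)*(c-a) = 1) by lia. apply Z.eq_mul_1_nonneg in G; lia.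
Qed.
Lemma notie a b c d : (a*d - b*c = 1 \/ a*d - b*c = -1) ->
  Z.abs a + Z.abs b = Z.abs c + Z.abs d ->
  Z.abs a + Z.abs b >= Z.abs (a-c) + Z.abs (b-d) -> False.
Proof.
  intros Hd H1 H2.
  destruct (Z.le_gt_cases 0 a); destruct (Z.le_gt_cases 0 b); destruct (Z.le_gt_cases 0 c); destruct (Z.le_gt_cases 0 d);
  try nia.
  - apply (q1 a (-b) c (-d)); lia.
  - apply (q1 (-a) b (-c) d); lia.
Qed.

Ltac absify := repeat match goal with
  | H : context [Z.abs ?x] |- _ => let a := fresh "a" in set (a := Z.abs x) in *; clearbody a
  | |- context [Z.abs ?x] => let a := fresh "a" in set (a := Z.abs x) in *; clearbody a
  end.

Lemma root_core z1 z2 p1 p2 k :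
  L1 z1 z2 > L1 p1 p2 -> L1 z1 z2 > L1 (p1-z1) (p2-z2) ->
  L1 z1 z2 > L1 (k*z1-p1) (k*z2-p2) -> L1 z1 z2 > L1 ((k-1)*z1-p1) ((k-1)*z2-p2) ->
  Z.min (L1 (k*z1-p1) (k*z2-p2)) (L1 ((k-1)*z1-p1) ((k-1)*z2-p2)) <= Z.min (L1 p1 p2) (L1 (p1-z1) (p2-z2)).
Proof.
  unfold L1. intros H1 H2 H3 H4.
  assert (Hk : -1 <= k <= 1).
  { assert (H : Z.abs (k*z1) + Z.abs (k*z2) < 2 * (Z.abs z1 + Z.abs z2)).
    { pose proof (Z.abs_triangle (k*z1-p1) p1). pose proof (Z.abs_triangle (k*z2-p2) p2).
      replace (k*z1-p1+p1) with (k*z1) in * by ring.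
      replace (k*z2-p2+p2) with (k*z2) in * by ring. clear H4 H2. absify. lia. }
    rewrite !Z.abs_mul, <- Z.mul_add_distr_l in H.
    set (s0 := Z.abs z1 + Z.abs z2) in *. assert (0 <= s0) by (unfold s0; lia). clearbody s0.
    assert (Hs : 0 < s0) by nia.
    assert (Z.abs k < 2) by (apply (Z.mul_lt_mono_pos_r s0); lia). lia. }
  assert (k = -1 \/ k = 0 \/ k = 1) as [E|[E|E]] by lia; subst k.
  - exfalso. 
    pose proof (Z.abs_triangle ((-1-1)*z1-p1) p1). pose proof (Z.abs_triangle ((-1-1)*z2-p2) p2).
    replace ((-1-1)*z1-p1+p1) with (-(2*z1)) in * by ring.
    replace ((-1-1)*z2-p2+p2) with (-(2*z2)) in * by ring.
    rewrite !Z.abs_opp, !Z.abs_mul in *. simpl (Z.abs 2) in *. clear H3 H2. absify. lia.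
  - exfalso. pose proof (Z.abs_triangle (p1-z1) ((0-1)*z1-p1)). pose proof (Z.abs_triangle (p2-z2) ((0-1)*z2-p2)).
    replace (p1-z1+((0-1)*z1-p1)) with (-(2*z1)) in * by ring.
    replace (p2-z2+((0-1)*z2-p2)) with (-(2*z2)) in * by ring.
    rewrite !Z.abs_opp, !Z.abs_mul in *. simpl (Z.abs 2) in *. clear H3 H1. absify. lia.
  - rewrite (absneg (1*z1-p1) (p1-z1)), (absneg (1*z2-p2) (p2-z2)), (absneg ((1-1)*z1-p1) p1), (absneg ((1-1)*z2-p2) p2) by ring.
    apply Z.eq_le_incl. apply Z.min_comm.
Qed.

Definition min3 a b c := Z.min a (Z.min b c).

Lemma L1_eq a b c d : a = c -> b = d -> L1 a b = L1 c d. Proof. intros -> ->; auto. Qed.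
Lemma L1_neg a b c d : a = -c -> b = -d -> L1 a b = L1 c d.
Proof. intros -> ->. unfold L1. rewrite !Z.abs_opp. auto. Qed.

Lemma strict a b c d : (a*d - b*c = 1 \/ a*d - b*c = -1) -> L1 a b >= L1 c d -> L1 a b >= L1 (a-c) (b-d) ->
  L1 a b > L1 c d.
Proof.
  intros Hd H1 H2. destruct (Z.eq_dec (L1 a b) (L1 c d)) as [E|E]; [|lia].
  exfalso. apply (notie a b c d Hd); unfold L1 in *; lia.
Qed.

Lemma root_int z1 z2 p1 p2 k : (z1*p2 - z2*p1 = 1 \/ z1*p2 - z2*p1 = -1) ->
  L1 z1 z2 >= L1 p1 p2 -> L1 z1 z2 >= L1 (p1-z1) (p2-z2) ->
  L1 z1 z2 >= L1 (k*z1-p1) (k*z2-p2) -> L1 z1 z2 >= L1 ((k-1)*z1-p1) ((k-1)*z2-p2) ->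
  min3 (L1 z1 z2) (L1 (k*z1-p1) (k*z2-p2)) (L1 ((k-1)*z1-p1) ((k-1)*z2-p2)) <=
  min3 (L1 z1 z2) (L1 p1 p2) (L1 (p1-z1) (p2-z2)).
Proof.
  intros Hd H1 H2 H3 H4.
  assert (S1 : L1 z1 z2 > L1 p1 p2).
  { apply strict; auto. rewrite (L1_neg (z1-p1) (z2-p2) (p1-z1) (p2-z2)) by ring. auto. }
  assert (S2 : L1 z1 z2 > L1 (p1-z1) (p2-z2)).
  { rewrite <- (L1_neg (z1-p1) (z2-p2) (p1-z1) (p2-z2)) by ring. apply strict.
    - lia.
    - rewrite (L1_neg (z1-p1) (z2-p2) (p1-z1) (p2-z2)) by ring. auto.
    - rewrite (L1_eq (z1-(z1-p1)) (z2-(z2-p2)) p1 p2) by ring. auto. }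
  assert (S3 : L1 z1 z2 > L1 (k*z1-p1) (k*z2-p2)).
  { apply strict; auto. lia. rewrite (L1_neg (z1-(k*z1-p1)) (z2-(k*z2-p2)) ((k-1)*z1-p1) ((k-1)*z2-p2)) by ring. auto. }
  assert (S4 : L1 z1 z2 > L1 ((k-1)*z1-p1) ((k-1)*z2-p2)).
  { rewrite <- (L1_neg (-((k-1)*z1-p1)) (-((k-1)*z2-p2)) ((k-1)*z1-p1) ((k-1)*z2-p2)) by ring. apply strict.
    - lia.
    - rewrite (L1_neg (-((k-1)*z1-p1)) (-((k-1)*z2-p2)) ((k-1)*z1-p1) ((k-1)*z2-p2)) by ring. auto.
    - rewrite (L1_eq (z1-(-((k-1)*z1-p1))) (z2-(-((k-1)*z2-p2))) (k*z1-p1) (k*z2-p2)) by ring. auto. }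
  pose proof (root_core z1 z2 p1 p2 k S1 S2 S3 S4). unfold min3. lia.
Qed.

Lemma step_int z1 z2 p1 p2 k : (z1*p2 - z2*p1 = 1 \/ z1*p2 - z2*p1 = -1) ->
  ((L1 p1 p2 >= L1 z1 z2 /\ L1 p1 p2 >= L1 (p1-z1) (p2-z2)) \/
   (L1 (p1-z1) (p2-z2) >= L1 z1 z2 /\ L1 (p1-z1) (p2-z2) >= L1 p1 p2)) ->
  L1 z1 z2 >= L1 (k*z1-p1) (k*z2-p2) -> L1 z1 z2 >= L1 ((k-1)*z1-p1) ((k-1)*z2-p2) ->
  min3 (L1 z1 z2) (L1 (k*z1-p1) (k*z2-p2)) (L1 ((k-1)*z1-p1) ((k-1)*z2-p2)) <=
  min3 (L1 z1 z2) (L1 p1 p2) (L1 (p1-z1) (p2-z2)).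
Proof.
  intros Hd Hpar H3 H4.
  assert (Hmax : Z.max (L1 p1 p2) (L1 (p1-z1) (p2-z2)) > L1 z1 z2).
  { destruct Hpar as [[A1 A2]|[A1 A2]].
    - assert (L1 p1 p2 > L1 z1 z2); [|lia].
      apply strict; auto. lia.
    - assert (L1 (p1-z1) (p2-z2) > L1 z1 z2); [|lia].
      rewrite <- (L1_neg (-z1) (-z2) z1 z2) by ring. apply strict.
      + lia.
      + rewrite (L1_neg (-z1) (-z2) z1 z2) by ring. auto.
      + rewrite (L1_eq (p1-z1-(-z1)) (p2-z2-(-z2)) p1 p2) by ring. auto. }
  destruct (Z.le_gt_cases (L1 z1 z2) (Z.min (L1 p1 p2) (L1 (p1-z1) (p2-z2)))) as [Hc|Hc].
  - unfold min3. lia.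
  - pose proof (lemG z1 z2 p1 p2 k Hmax ltac:(lia) H3 H4). unfold min3. lia.
Qed.

Lemma hmax z1 z2 p1 p2 : (z1*p2 - z2*p1 = 1 \/ z1*p2 - z2*p1 = -1) ->
  ((L1 p1 p2 >= L1 z1 z2 /\ L1 p1 p2 >= L1 (p1-z1) (p2-z2)) \/
   (L1 (p1-z1) (p2-z2) >= L1 z1 z2 /\ L1 (p1-z1) (p2-z2) >= L1 p1 p2)) ->
  Z.max (L1 p1 p2) (L1 (p1-z1) (p2-z2)) > L1 z1 z2.
Proof.
  intros Hd Hpar. destruct Hpar as [[A1 A2]|[A1 A2]].
  - assert (L1 p1 p2 > L1 z1 z2); [|lia]. apply strict; auto. lia.
  - assert (L1 (p1-z1) (p2-z2) > L1 z1 z2); [|lia].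
    rewrite <- (L1_neg (-z1) (-z2) z1 z2) by ring. apply strict.
    + lia.
    + rewrite (L1_neg (-z1) (-z2) z1 z2) by ring. auto.
    + rewrite (L1_eq (p1-z1-(-z1)) (p2-z2-(-z2)) p1 p2) by ring. auto.
Qed.

Open Scope Z_scope.

Definition tperm (D : tri) (P Q R : pt) : Prop :=
  (P = tA D /\ Q = tB D /\ R = tC D) \/ (P = tB D /\ Q = tC D /\ R = tA D) \/ (P = tC D /\ Q = tA D /\ R = tB D) \/
  (P = tB D /\ Q = tA D /\ R = tC D) \/ (P = tA D /\ Q = tC D /\ R = tB D) \/ (P = tC D /\ Q = tB D /\ R = tA D).

Lemma tperm_id D : tperm D (tA D) (tB D) (tC D). Proof. left; auto. Qed.
Lemma tperm_swap D P Q R : tperm D P Q R -> tperm D Q P R.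
Proof. unfold tperm; intros H; decompose [or and] H; subst; tauto. Qed.
Lemma tperm_rot D P Q R : tperm D P Q R -> tperm D Q R P.
Proof. unfold tperm; intros H; decompose [or and] H; subst; tauto. Qed.

Lemma tperm_inS sigma D P Q R : is_tri sigma D -> tperm D P Q R -> inS sigma (P,Q).
Proof.
  intros (_&H1&H2&H3&_) H. unfold tperm in H; decompose [or and] H; subst;
  first [assumption | eapply inS_same; [apply same_edge_swap | eassumption]].
Qed.

Lemma tperm_has D P Q R : tperm D P Q R -> tri_has D (P,Q).
Proof.
  unfold tri_has, tperm; intros H; decompose [or and] H; subst;
  first [left; apply same_edge_refl | right; left; apply same_edge_refl | right; right; apply same_edge_refl
        | left; apply same_edge_swap | right; left; apply same_edge_swap | right; right; apply same_edge_swap].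
Qed.

Lemma tperm_cases D P Q R e : tperm D P Q R -> tri_has D e ->
  same_edge e (P,Q) \/ same_edge e (Q,R) \/ same_edge e (R,P).
Proof.
  unfold tri_has, tperm; intros H He.
  assert (Sw : forall a b, same_edge e (a,b) -> same_edge e (b,a))
    by (intros; eapply same_edge_trans; eauto; apply same_edge_swap).
  decompose [or and] H; subst; decompose [or] He; auto.
Qed.

Lemma has_perm D e : tri_has D e -> exists P Q R, tperm D P Q R /\ same_edge e (P,Q).
Proof.
  unfold tri_has; intros [H|[H|H]].
  - exists (tA D), (tB D), (tC D). split; auto. left; auto.
  - exists (tB D), (tC D), (tA D). split; auto. right; left; auto.
  - exists (tC D), (tA D), (tB D). split; auto. right; right; left; auto.
Qed.

Lemma mid_perm D y : tri_mid D y -> exists P Q R, tperm D P Q R /\ mid (P,Q) = y.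
Proof.
  unfold tri_mid; intros [H|[H|H]].
  - exists (tA D), (tB D), (tC D). split; auto. left; auto.
  - exists (tB D), (tC D), (tA D). split; auto. right; left; auto.
  - exists (tC D), (tA D), (tB D). split; auto. right; right; left; auto.
Qed.

Lemma tperm_det D P Q R : tperm D P Q R -> Z.abs (detZ P Q R) = Z.abs (detZ (tA D) (tB D) (tC D)).
Proof.
  unfold tperm, detZ; intros H; decompose [or and] H; subst;
  match goal with |- Z.abs ?a = Z.abs ?b => first [reflexivity | f_equal; ring | rewrite <- (Z.abs_opp b); f_equal; ring] end.
Qed.

Definition tmin (D : tri) := min3 (len (tA D, tB D)) (len (tB D, tC D)) (len (tC D, tA D)).

Lemma len_swap a b : len (a,b) = len (b,a).
Proof. apply len_same. apply same_edge_swap. Qed.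

Lemma tperm_min D P Q R : tperm D P Q R -> min3 (len (P,Q)) (len (Q,R)) (len (R,P)) = tmin D.
Proof.
  unfold tperm, tmin, min3; intros H; decompose [or and] H; subst;
  rewrite ?(len_swap (tB D) (tA D)), ?(len_swap (tC D) (tB D)), ?(len_swap (tA D) (tC D)); lia.
Qed.

Lemma tperm_distinct sigma D P Q R : is_tri sigma D -> tperm D P Q R -> P <> Q /\ Q <> R /\ R <> P.
Proof.
  intros (Hn&_) H. unfold noncollinear in Hn.
  assert (HAB : tA D <> tB D) by (intro E; apply Hn; rewrite E; ring).
  assert (HBC : tB D <> tC D) by (intro E; apply Hn; rewrite E; ring).
  assert (HCA : tC D <> tA D) by (intro E; apply Hn; rewrite E; ring).
  unfold tperm in H; decompose [or and] H; subst; repeat split; auto.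
Qed.

Lemma open_common vs xi sigma e1 e2 q : Setup vs xi sigma -> inS sigma e1 -> inS sigma e2 ->
  in_open_seg e1 q -> in_open_seg e2 q -> same_edge e1 e2.
Proof.
  intros HS (f1 & Hf1 & S1) (f2 & Hf2 & S2) H1 H2.
  destruct (sigma_adm _ _ _ HS) as [_ Hd].
  destruct (classic (same_edge f1 f2)) as [Hs|Hs].
  - eapply same_edge_trans; [eauto|]. eapply same_edge_trans; [eauto|]. apply same_edge_sym; auto.
  - exfalso. apply (Hd f1 f2 Hf1 Hf2 Hs q). split; eapply open_same; eauto.
Qed.

Lemma cramer z1 z2 p1 p2 r1 r2 :
  r1 * (z1*p2 - z2*p1) = (r1*p2 - r2*p1) * z1 + (z1*r2 - z2*r1) * p1 /\
  r2 * (z1*p2 - z2*p1) = (r1*p2 - r2*p1) * z2 + (z1*r2 - z2*r1) * p2.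
Proof. split; ring. Qed.

Lemma share_edge vs xi sigma D0 D P Q R S : Setup vs xi sigma -> is_tri sigma D0 -> is_tri sigma D ->
  tperm D0 P Q R -> tperm D P Q S ->
  S = R \/ exists k, fst S - fst P = k*(fst Q - fst P) - (fst R - fst P) /\
                     snd S - snd P = k*(snd Q - snd P) - (snd R - snd P).
Proof.
  intros HS HT0 HT H0 H.
  assert (U0 := unimod _ _ _ _ HS HT0). assert (U1 := unimod _ _ _ _ HS HT).
  rewrite <- (tperm_det _ _ _ _ H0) in U0. rewrite <- (tperm_det _ _ _ _ H) in U1.
  destruct (tperm_distinct _ _ _ _ _ HT0 H0) as (PQ & QR & RP).
  destruct (tperm_distinct _ _ _ _ _ HT H) as (_ & QS & SP).
  unfold detZ in U0, U1.
  set (z1 := fst Q - fst P) in *. set (z2 := snd Q - snd P) in *.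
  set (p1 := fst R - fst P) in *. set (p2 := snd R - snd P) in *.
  set (q1 := fst S - fst P) in *. set (q2 := snd S - snd P) in *.
  assert (E0 : z1*p2 - z2*p1 = 1 \/ z1*p2 - z2*p1 = -1) by lia.
  assert (E1 : z1*q2 - z2*q1 = 1 \/ z1*q2 - z2*q1 = -1) by lia.
  destruct (Z.eq_dec (z1*q2 - z2*q1) (-(z1*p2 - z2*p1))) as [Opp|Same].
  - right. set (eps := z1*p2 - z2*p1) in *.
    set (r1 := p1 + q1). set (r2 := p2 + q2).
    destruct (cramer z1 z2 p1 p2 r1 r2) as [C1 C2].
    assert (Hz : z1*r2 - z2*r1 = 0) by (unfold r1, r2; lia).
    rewrite Hz in C1, C2. fold eps in C1, C2.
    exists (eps * (r1*p2 - r2*p1)). split.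
    + assert (r1 = eps * (r1*p2 - r2*p1) * z1) by (destruct E0 as [E|E]; rewrite E in C1; nia).
      unfold r1 in *. lia.
    + assert (r2 = eps * (r1*p2 - r2*p1) * z2) by (destruct E0 as [E|E]; rewrite E in C2; nia).
      unfold r2 in *. lia.
  - assert (Eq : z1*q2 - z2*q1 = z1*p2 - z2*p1) by lia.
    set (eps := z1*p2 - z2*p1) in *.
    set (r1 := q1 - p1). set (r2 := q2 - p2).
    destruct (cramer z1 z2 p1 p2 r1 r2) as [C1 C2].
    assert (Hz : z1*r2 - z2*r1 = 0) by (unfold r1, r2; lia).
    rewrite Hz in C1, C2. fold eps in C1, C2.
    set (m := eps * (r1*p2 - r2*p1)).
    assert (Hr1 : r1 = m * z1) by (unfold m; destruct E0 as [E|E]; rewrite E in C1; nia).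
    assert (Hr2 : r2 = m * z2) by (unfold m; destruct E0 as [E|E]; rewrite E in C2; nia).
    clearbody m. unfold r1, r2 in Hr1, Hr2.
    destruct (Z.eq_dec m 0) as [M0|M0].
    { left. subst m. destruct S, R, P; unfold q1, q2, p1, p2 in *; simpl in *. f_equal; lia. }
    exfalso.
    assert (HQR : inS sigma (Q,R)) by (apply (tperm_inS sigma D0 Q R P HT0 (tperm_rot _ _ _ _ H0))).
    assert (HRP : inS sigma (P,R)).
    { eapply inS_same; [apply same_edge_swap|]. apply (tperm_inS sigma D0 R P Q HT0 (tperm_rot _ _ _ _ (tperm_rot _ _ _ _ H0))). }
    assert (HPS : inS sigma (P,S)).
    { eapply inS_same; [apply same_edge_swap|]. apply (tperm_inS sigma D S P Q HT (tperm_rot _ _ _ _ (tperm_rot _ _ _ _ H))). }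
    assert (HQS : inS sigma (Q,S)) by (apply (tperm_inS sigma D Q S P HT (tperm_rot _ _ _ _ H))).
    assert (Rq1 : (IZR (fst S) = IZR (fst R) + IZR m * (IZR (fst Q) - IZR (fst P)))%R).
    { rewrite <- !minus_IZR, <- mult_IZR, <- plus_IZR. f_equal. unfold q1, p1, z1 in *. lia. }
    assert (Rq2 : (IZR (snd S) = IZR (snd R) + IZR m * (IZR (snd Q) - IZR (snd P)))%R).
    { rewrite <- !minus_IZR, <- mult_IZR, <- plus_IZR. f_equal. unfold q2, p2, z2 in *. lia. }
    destruct (proj1 (Z.lt_gt_cases m 0) M0) as [Mn|Mp].
    + (* edges (P,R) and (Q,S) cross *)
      assert (Hm : (IZR m <= -1)%R) by (apply IZR_le; lia).
      set (t := (1 / (1 - IZR m))%R).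
      assert (Ht : (0 < t < 1)%R).
      { unfold t. split. apply Rdiv_lt_0_compat; lra. apply Rmult_lt_reg_r with (1 - IZR m)%R; [lra|].
        field_simplify; lra. }
      set (pt := (rx P + t * (rx R - rx P), ry P + t * (ry R - ry P))%R).
      assert (O1 : in_open_seg (P,R) pt) by (exists t; split; auto).
      assert (O2 : in_open_seg (Q,S) pt).
      { exists t. split; auto. unfold pt, rx, ry; simpl. rewrite Rq1, Rq2. unfold t. split; field; lra. }
      destruct (open_common _ _ _ _ _ _ HS HRP HQS O1 O2) as [E|E]; inversion E; subst; auto.
    + assert (Hm : (1 <= IZR m)%R) by (apply IZR_le; lia).
      set (t := (1 / (1 + IZR m))%R).
      assert (Ht : (0 < t < 1)%R).
      { unfold t. split. apply Rdiv_lt_0_compat; lra. apply Rmult_lt_reg_r with (1 + IZR m)%R; [lra|].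
        field_simplify; lra. }
      set (pt := (rx Q + t * (rx R - rx Q), ry Q + t * (ry R - ry Q))%R).
      assert (O1 : in_open_seg (Q,R) pt) by (exists t; split; auto).
      assert (O2 : in_open_seg (P,S) pt).
      { exists t. split; auto. unfold pt, rx, ry; simpl. rewrite Rq1, Rq2. unfold t. split; field; lra. }
      destruct (open_common _ _ _ _ _ _ HS HQR HPS O1 O2) as [E|E]; inversion E; subst; auto.
Qed.

Lemma lens P Q R : len (P,Q) = L1 (fst Q - fst P) (snd Q - snd P) /\
  len (Q,R) = L1 ((fst R - fst P) - (fst Q - fst P)) ((snd R - snd P) - (snd Q - snd P)) /\
  len (R,P) = L1 (fst R - fst P) (snd R - snd P).
Proof.
  unfold len, L1; simpl. split; [|split]; auto.
  - rewrite (absneg (fst P - fst Q) (fst Q - fst P)), (absneg (snd P - snd Q) (snd Q - snd P)) by ring. auto.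
  - rewrite (absneg (fst Q - fst R) (fst R - fst P - (fst Q - fst P))), (absneg (snd Q - snd R) (snd R - snd P - (snd Q - snd P))) by ring. auto.
Qed.

Lemma det_pm vs xi sigma D P Q R : Setup vs xi sigma -> is_tri sigma D -> tperm D P Q R ->
  (fst Q - fst P) * (snd R - snd P) - (snd Q - snd P) * (fst R - fst P) = 1 \/
  (fst Q - fst P) * (snd R - snd P) - (snd Q - snd P) * (fst R - fst P) = -1.
Proof.
  intros HS HT H. pose proof (unimod _ _ _ _ HS HT) as U. rewrite <- (tperm_det _ _ _ _ H) in U.
  unfold detZ in U. lia.
Qed.

Lemma transfer_step vs xi sigma D0 D P Q R S : Setup vs xi sigma -> is_tri sigma D0 -> is_tri sigma D ->
  tperm D0 P Q R -> tperm D P Q S ->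
  ((len (R,P) >= len (P,Q) /\ len (R,P) >= len (Q,R)) \/ (len (Q,R) >= len (P,Q) /\ len (Q,R) >= len (R,P))) ->
  len (P,Q) >= len (Q,S) -> len (P,Q) >= len (S,P) ->
  tmin D <= tmin D0.
Proof.
  intros HS HT0 HT H0 H Hpar HL1 HL2.
  rewrite <- (tperm_min _ _ _ _ H0), <- (tperm_min _ _ _ _ H).
  pose proof (det_pm _ _ _ _ _ _ _ HS HT0 H0) as Hd.
  destruct (lens P Q R) as (E1 & E2 & E3). destruct (lens P Q S) as (_ & F2 & F3).
  destruct (share_edge _ _ _ _ _ _ _ _ _ HS HT0 HT H0 H) as [ES|(k & K1 & K2)].
  - exfalso. subst S. rewrite E1, E2, E3 in *.
    pose proof (hmax _ _ _ _ Hd ltac:(lia)). lia.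
  - rewrite E1, E2, E3, F2, F3 in *. rewrite K1, K2 in *.
    rewrite (L1_eq (k * (fst Q - fst P) - (fst R - fst P) - (fst Q - fst P))
                   (k * (snd Q - snd P) - (snd R - snd P) - (snd Q - snd P))
                   ((k-1) * (fst Q - fst P) - (fst R - fst P)) ((k-1) * (snd Q - snd P) - (snd R - snd P))) in * by ring.
    pose proof (step_int _ _ _ _ k Hd ltac:(lia) HL2 HL1). unfold min3 in *. lia.
Qed.

Lemma transfer_root vs xi sigma D0 D P Q R S : Setup vs xi sigma -> is_tri sigma D0 -> is_tri sigma D ->
  tperm D0 P Q R -> tperm D P Q S ->
  len (P,Q) >= len (Q,R) -> len (P,Q) >= len (R,P) ->
  len (P,Q) >= len (Q,S) -> len (P,Q) >= len (S,P) ->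
  tmin D <= tmin D0.
Proof.
  intros HS HT0 HT H0 H G1 G2 HL1 HL2.
  rewrite <- (tperm_min _ _ _ _ H0), <- (tperm_min _ _ _ _ H).
  pose proof (det_pm _ _ _ _ _ _ _ HS HT0 H0) as Hd.
  destruct (lens P Q R) as (E1 & E2 & E3). destruct (lens P Q S) as (_ & F2 & F3).
  destruct (share_edge _ _ _ _ _ _ _ _ _ HS HT0 HT H0 H) as [ES|(k & K1 & K2)].
  - subst S. lia.
  - rewrite E1, E2, E3, F2, F3 in *. rewrite K1, K2 in *.
    rewrite (L1_eq (k * (fst Q - fst P) - (fst R - fst P) - (fst Q - fst P))
                   (k * (snd Q - snd P) - (snd R - snd P) - (snd Q - snd P))
                   ((k-1) * (fst Q - fst P) - (fst R - fst P)) ((k-1) * (snd Q - snd P) - (snd R - snd P))) in * by ring.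
    pose proof (root_int _ _ _ _ k Hd ltac:(lia) ltac:(lia) HL2 HL1). unfold min3 in *. lia.
Qed.

Definition Inv (sigma : edge -> Prop) (w : Z) (c : pt) : Prop :=
  forall D P Q R, is_tri sigma D -> tperm D P Q R -> mid (P,Q) = c ->
    len (P,Q) >= len (Q,R) -> len (P,Q) >= len (R,P) -> tmin D <= w.

Lemma align vs xi sigma D0 D P Q R P' Q' S : Setup vs xi sigma -> is_tri sigma D0 -> is_tri sigma D ->
  tperm D0 P Q R -> tperm D P' Q' S -> mid (P',Q') = mid (P,Q) ->
  tperm D P Q S /\ len (P,Q) = len (P',Q') /\ len (Q,S) = len (Q',S) /\ len (S,P) = len (S,P') \/
  tperm D P Q S /\ len (P,Q) = len (P',Q') /\ len (Q,S) = len (S,P') /\ len (S,P) = len (Q',S).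
Proof.
  intros HS HT0 HT H0 H Hm.
  assert (E := mid_inj _ _ _ _ _ HS (tperm_inS _ _ _ _ _ HT H) (tperm_inS _ _ _ _ _ HT0 H0) Hm).
  destruct E as [E|E]; inversion E; subst.
  - left. auto.
  - right. split; [apply tperm_swap; auto|]. rewrite !len_swap with (a := S). rewrite len_swap. auto.
Qed.

Lemma Inv_of_root vs xi sigma w D0 P Q R c : Setup vs xi sigma -> is_tri sigma D0 -> tperm D0 P Q R ->
  mid (P,Q) = c -> len (P,Q) >= len (Q,R) -> len (P,Q) >= len (R,P) -> tmin D0 <= w -> Inv sigma w c.
Proof.
  intros HS HT0 H0 Hm G1 G2 Hw D P' Q' S HT H Hm' HL1 HL2.
  destruct (align _ _ _ _ _ _ _ _ _ _ _ HS HT0 HT H0 H ltac:(congruence)) as [(H' & A1 & A2 & A3)|(H' & A1 & A2 & A3)].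
  - pose proof (transfer_root _ _ _ _ _ _ _ _ _ HS HT0 HT H0 H' G1 G2 ltac:(lia) ltac:(lia)). lia.
  - pose proof (transfer_root _ _ _ _ _ _ _ _ _ HS HT0 HT H0 H' G1 G2 ltac:(lia) ltac:(lia)). lia.
Qed.

Lemma tperm_has3 D P Q R : tperm D P Q R -> tri_has D (P,Q) /\ tri_has D (Q,R) /\ tri_has D (R,P).
Proof.
  intros H. split; [|split].
  - exact (tperm_has _ _ _ _ H).
  - exact (tperm_has _ _ _ _ (tperm_rot _ _ _ _ H)).
  - exact (tperm_has _ _ _ _ (tperm_rot _ _ _ _ (tperm_rot _ _ _ _ H))).
Qed.

Lemma child_info vs xi sigma x p c : Setup vs xi sigma -> (Fdec sigma x \/ Fdiag sigma x) ->
  tchild sigma x p c ->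
  exists D0 P Q R, is_tri sigma D0 /\ tperm D0 P Q R /\ mid (P,Q) = c /\
    ((mid (Q,R) = p /\ len (Q,R) >= len (P,Q) /\ len (Q,R) >= len (R,P)) \/
     (mid (R,P) = p /\ len (R,P) >= len (P,Q) /\ len (R,P) >= len (Q,R))).
Proof.
  intros HS HF Hc.
  assert (Hi : exists D0, is_tri sigma D0 /\ tri_mid D0 c /\ c <> p /\
     exists e, tri_has D0 e /\ mid e = p /\ forall e', tri_has D0 e' -> (len e' <= len e)%Z).
  { destruct Hc as [D c Hd Hx Hc1 Hne | z y D c _ Hd Hy _ (e & He & Hme & Hl) Hc1 Hne].
    - exists D. split; [|split; [|split]]; auto.
      assert (Hf : exists e0, sig_at sigma x e0 /\ forall D, is_tri sigma D -> tri_has D e0 -> longest_edge D e0)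
        by (destruct HF as [(e0 & Hs & _ & Hl)|(e0 & Hs & _ & Hl)]; exists e0; auto).
      destruct Hf as (e0 & (Hs & Hme) & Hl).
      destruct (mid_perm _ _ Hx) as (P & Q & R & H & Hm).
      assert (E := mid_inj _ _ _ _ _ HS Hs (tperm_inS _ _ _ _ _ Hd H) ltac:(congruence)).
      assert (Hh : tri_has D e0).
      { destruct (tperm_has _ _ _ _ H) as [A|[A|A]]; [left|right;left|right;right]; eapply same_edge_trans; eauto. }
      exists e0. split; auto. split; auto. apply (Hl D Hd Hh).
    - exists D. split; [|split; [|split]]; auto. exists e; auto. }
  destruct Hi as (D0 & HT & Hcm & Hne & e & He & Hme & Hl).
  destruct (mid_perm _ _ Hcm) as (P & Q & R & H & Hm).
  exists D0, P, Q, R. split; auto. split; auto. split; auto.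
  destruct (tperm_has3 _ _ _ _ H) as (T1 & T2 & T3).
  pose proof (Hl _ T1). pose proof (Hl _ T2). pose proof (Hl _ T3).
  destruct (tperm_cases _ _ _ _ _ H He) as [A|[A|A]].
  - exfalso. apply Hne. rewrite <- Hm, <- Hme. symmetry. apply mid_same; auto.
  - left. rewrite <- (mid_same _ _ A), <- (len_same _ _ A). repeat split; auto; lia.
  - right. rewrite <- (mid_same _ _ A), <- (len_same _ _ A). repeat split; auto; lia.
Qed.

Lemma Inv_step vs xi sigma x w p c : Setup vs xi sigma -> (Fdec sigma x \/ Fdiag sigma x) ->
  Inv sigma w p -> tchild sigma x p c -> Inv sigma w c.
Proof.
  intros HS HF Hp Hc.
  destruct (child_info _ _ _ _ _ _ HS HF Hc) as (D0 & P & Q & R & HT0 & H0 & Hm & Hpar).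
  assert (Hw : tmin D0 <= w).
  { destruct Hpar as [(Em & L1' & L2')|(Em & L1' & L2')].
    - apply (Hp D0 Q R P HT0 (tperm_rot _ _ _ _ H0) Em); lia.
    - apply (Hp D0 R P Q HT0 (tperm_rot _ _ _ _ (tperm_rot _ _ _ _ H0)) Em); lia. }
  intros D P' Q' S HT H Hm' HL1 HL2.
  assert (Hpar' : (len (R,P) >= len (P,Q) /\ len (R,P) >= len (Q,R)) \/ (len (Q,R) >= len (P,Q) /\ len (Q,R) >= len (R,P)))
    by (destruct Hpar as [(_&?&?)|(_&?&?)]; auto).
  destruct (align _ _ _ _ _ _ _ _ _ _ _ HS HT0 HT H0 H ltac:(congruence)) as [(H' & A1 & A2 & A3)|(H' & A1 & A2 & A3)].
  - pose proof (transfer_step _ _ _ _ _ _ _ _ _ HS HT0 HT H0 H' Hpar' ltac:(lia) ltac:(lia)). lia.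
  - pose proof (transfer_step _ _ _ _ _ _ _ _ _ HS HT0 HT H0 H' Hpar' ltac:(lia) ltac:(lia)). lia.
Qed.

Lemma Inv_trans vs xi sigma x w a b : Setup vs xi sigma -> (Fdec sigma x \/ Fdiag sigma x) ->
  Inv sigma w a -> clos_trans pt (tchild sigma x) a b -> Inv sigma w b.
Proof.
  intros HS HF Ha Hab. induction Hab as [a b Hab|a b c _ IH1 _ IH2].
  - eapply Inv_step; eauto.
  - apply IH2, IH1, Ha.
Qed.

Lemma cover3 D P Q R e1 e2 e3 : tperm D P Q R -> tri_has D e1 -> tri_has D e2 -> tri_has D e3 ->
  ~ same_edge e1 e2 -> ~ same_edge e2 e3 -> ~ same_edge e1 e3 ->
  forall f, (f = (P,Q) \/ f = (Q,R) \/ f = (R,P)) -> same_edge f e1 \/ same_edge f e2 \/ same_edge f e3.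
Proof.
  intros H H1 H2 H3 N12 N23 N13 f Hf.
  destruct (tperm_cases _ _ _ _ _ H H1) as [A1|[A1|A1]];
  destruct (tperm_cases _ _ _ _ _ H H2) as [A2|[A2|A2]];
  destruct (tperm_cases _ _ _ _ _ H H3) as [A3|[A3|A3]];
  destruct Hf as [Ef|[Ef|Ef]]; subst f;
  first [ left; apply same_edge_sym; assumption
        | right; left; apply same_edge_sym; assumption
        | right; right; apply same_edge_sym; assumption
        | exfalso; apply N12; eapply same_edge_trans; [eassumption|apply same_edge_sym; eassumption]
        | exfalso; apply N23; eapply same_edge_trans; [eassumption|apply same_edge_sym; eassumption]
        | exfalso; apply N13; eapply same_edge_trans; [eassumption|apply same_edge_sym; eassumption] ].
Qed.

Theorem main_proof (vs : list pt) (xi sigma : edge -> Prop) (x : pt)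
    (D1 D2 : tri) (y1 z1 w1 y2 z2 w2 : pt)
    (ey1 ez1 ew1 ey2 ez2 ew2 : edge) :
  lattice_polygon vs ->
  boundary_condition vs xi ->
  Omega vs xi sigma ->
  (Fdec sigma x \/ Fdiag sigma x) ->
  is_tri sigma D1 -> is_tri sigma D2 ->
  sig_at sigma y1 ey1 -> sig_at sigma z1 ez1 -> sig_at sigma w1 ew1 ->
  sig_at sigma y2 ey2 -> sig_at sigma z2 ez2 -> sig_at sigma w2 ew2 ->
  tri_has D1 ey1 -> tri_has D1 ez1 -> tri_has D1 ew1 -> z1 <> w1 ->
  tri_has D2 ey2 -> tri_has D2 ez2 -> tri_has D2 ew2 -> z2 <> w2 ->
  (len ey1 > len ez1)%Z -> (len ez1 >= len ew1)%Z ->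
  (len ey2 > len ez2)%Z -> (len ez2 >= len ew2)%Z ->
  ancestor sigma x y1 y2 ->
  (len ew1 >= len ew2)%Z.
Proof.
  intros Hp Hb Ho HF HT1 HT2 [Sy1 My1] [Sz1 Mz1] [Sw1 Mw1] [Sy2 My2] [Sz2 Mz2] [Sw2 Mw2]
    Hy1 Hz1 Hw1 Nzw1 Hy2 Hz2 Hw2 Nzw2 G1 G2 G3 G4 Hanc.
  assert (HS : Setup vs xi sigma) by (split; auto).
  assert (N1 : ~ same_edge ey1 ez1) by (intro E; apply len_same in E; lia).
  assert (N2 : ~ same_edge ez1 ew1) by (intro E; apply mid_same in E; congruence).
  assert (N3 : ~ same_edge ey1 ew1) by (intro E; apply len_same in E; lia).
  assert (N4 : ~ same_edge ey2 ez2) by (intro E; apply len_same in E; lia).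
  assert (N5 : ~ same_edge ez2 ew2) by (intro E; apply mid_same in E; congruence).
  assert (N6 : ~ same_edge ey2 ew2) by (intro E; apply len_same in E; lia).
  destruct (has_perm _ _ Hy1) as (P & Q & R & H1 & Sq1).
  assert (Cov1 := cover3 _ _ _ _ _ _ _ H1 Hy1 Hz1 Hw1 N1 N2 N3).
  assert (Hlen1 : forall f, (f = (P,Q) \/ f = (Q,R) \/ f = (R,P)) -> len f <= len ey1 /\ len f >= len ew1).
  { intros f Hf. destruct (Cov1 f Hf) as [E|[E|E]]; apply len_same in E; lia. }
  assert (Hinv1 : Inv sigma (len ew1) y1).
  { apply (Inv_of_root vs xi sigma (len ew1) D1 P Q R y1 HS HT1 H1).
    - rewrite <- (mid_same _ _ Sq1). auto.
    - rewrite <- (len_same _ _ Sq1). destruct (Hlen1 (Q,R)); auto; lia.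
    - rewrite <- (len_same _ _ Sq1). destruct (Hlen1 (R,P)); auto; lia.
    - rewrite <- (tperm_min _ _ _ _ H1). unfold min3.
      destruct (tperm_cases _ _ _ _ _ H1 Hw1) as [E|[E|E]]; apply len_same in E; lia. }
  assert (Hinv2 := Inv_trans _ _ _ _ _ _ _ HS HF Hinv1 Hanc).
  destruct (has_perm _ _ Hy2) as (P2 & Q2 & R2 & H2 & Sq2).
  assert (Cov2 := cover3 _ _ _ _ _ _ _ H2 Hy2 Hz2 Hw2 N4 N5 N6).
  assert (Hlen2 : forall f, (f = (P2,Q2) \/ f = (Q2,R2) \/ f = (R2,P2)) -> len f <= len ey2 /\ len f >= len ew2).
  { intros f Hf. destruct (Cov2 f Hf) as [E|[E|E]]; apply len_same in E; lia. }
  assert (Ht := Hinv2 D2 P2 Q2 R2 HT2 H2).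
  rewrite <- (tperm_min _ _ _ _ H2) in Ht. unfold min3 in Ht.
  destruct (Hlen2 (P2,Q2)) as [A1 A2]; auto. destruct (Hlen2 (Q2,R2)) as [B1 B2]; auto.
  destruct (Hlen2 (R2,P2)) as [C1 C2]; auto.
  rewrite <- (len_same _ _ Sq2) in *.
  specialize (Ht ltac:(rewrite <- (mid_same _ _ Sq2); auto) ltac:(lia) ltac:(lia)). lia.
Qed.

Theorem mainTheorem5 (vs : list pt) (xi sigma : edge -> Prop) (x : pt)
    (D1 D2 : tri) (y1 z1 w1 y2 z2 w2 : pt)
    (ey1 ez1 ew1 ey2 ez2 ew2 : edge) :
  lattice_polygon vs ->
  boundary_condition vs xi ->
  Omega vs xi sigma ->
  (Fdec sigma x \/ Fdiag sigma x) ->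
  is_tri sigma D1 -> is_tri sigma D2 ->
  sig_at sigma y1 ey1 -> sig_at sigma z1 ez1 -> sig_at sigma w1 ew1 ->
  sig_at sigma y2 ey2 -> sig_at sigma z2 ez2 -> sig_at sigma w2 ew2 ->
  tri_has D1 ey1 -> tri_has D1 ez1 -> tri_has D1 ew1 -> z1 <> w1 ->
  tri_has D2 ey2 -> tri_has D2 ez2 -> tri_has D2 ew2 -> z2 <> w2 ->
  (len ey1 > len ez1)%Z -> (len ez1 >= len ew1)%Z ->
  (len ey2 > len ez2)%Z -> (len ez2 >= len ew2)%Z ->
  in_tree sigma x y1 -> in_tree sigma x z1 -> in_tree sigma x w1 ->
  in_tree sigma x y2 -> in_tree sigma x z2 -> in_tree sigma x w2 ->
  tchild sigma x y1 z1 -> tchild sigma x y1 w1 ->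
  tchild sigma x y2 z2 -> tchild sigma x y2 w2 ->
  ancestor sigma x y1 y2 ->
  (len ew1 >= len ew2)%Z.
Proof.
  intros Hp Hb Ho HF HT1 HT2 Sy1 Sz1 Sw1 Sy2 Sz2 Sw2 Hy1 Hz1 Hw1 Nzw1 Hy2 Hz2 Hw2 Nzw2 G1 G2 G3 G4
    _ _ _ _ _ _ _ _ _ _ Hanc.
  exact (main_proof vs xi sigma x D1 D2 y1 z1 w1 y2 z2 w2 ey1 ez1 ew1 ey2 ez2 ew2 Hp Hb Ho HF HT1 HT2
    Sy1 Sz1 Sw1 Sy2 Sz2 Sw2 Hy1 Hz1 Hw1 Nzw1 Hy2 Hz2 Hw2 Nzw2 G1 G2 G3 G4 Hanc).
Qed.
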